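(* Let $\mathcal T=(T_1,\dots,T_n)\in B(H)^n$. Then $$\bigcup_{\mathcal K\in\mathcal K(H)^n}\mathcal D_{\rm const}(\mathcal T+\mathcal K)=W_{\rm e}(\mathcal T).$$
   Context: $H$ is an infinite-dimensional complex separable Hilbert space and $\mathcal K(H)$ the compact operators on $H$; for $\mathcal K=(K_1,\dots,K_n)$, $\mathcal T+\mathcal K=(T_1+K_1,\dots,T_n+K_n)$. $W_{\rm e}(\mathcal T)$ is the set of $\lambda\in\mathbb C^n$ such that $\langle T_jx_k,x_k\rangle\to\lambda_j$ for all $j$ for some orthonormal sequence $(x_k)$. $\mathcal D_{\rm const}(\mathcal T)$ is the set of $\lambda\in\mathbb C^n$ for which there is an orthonormal basis $(u_k)$ of $H$ with $\langle T_ju_k,u_k\rangle=\lambda_j$ for all $k$ and $j$. *)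

(* Defs.v *)
From Stdlib Require Import Reals.
From Stdlib Require Fin.
Open Scope R_scope.
Set Implicit Arguments.

Record complex := mkC { Re : R; Im : R }.
Definition C0 : complex := mkC 0 0.
Definition C1 : complex := mkC 1 0.
Definition Cadd (a b : complex) : complex := mkC (Re a + Re b) (Im a + Im b).
Definition Copp (a : complex) : complex := mkC (- Re a) (- Im a).
Definition Csub (a b : complex) : complex := Cadd a (Copp b).
Definition Cmul (a b : complex) : complex :=
  mkC (Re a * Re b - Im a * Im b) (Re a * Im b + Im a * Re b).
Definition Cconj (a : complex) : complex := mkC (Re a) (- Im a).
Definition Cmod (a : complex) : R := sqrt (Re a * Re a + Im a * Im a).

Definition Ccv (u : nat -> complex) (l : complex) : Prop :=
  Un_cv (fun k => Cmod (Csub (u k) l)) 0.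

(** * Complex Hilbert spaces (inner product linear in the first slot) *)
Record CHilbertSpace := {
  hs :> Type;
  hzero : hs;
  hadd : hs -> hs -> hs;
  hopp : hs -> hs;
  hscal : complex -> hs -> hs;
  hinner : hs -> hs -> complex;
  hadd_assoc : forall x y z, hadd x (hadd y z) = hadd (hadd x y) z;
  hadd_comm : forall x y, hadd x y = hadd y x;
  hadd_0 : forall x, hadd x hzero = x;
  hadd_opp : forall x, hadd x (hopp x) = hzero;
  hscal_1 : forall x, hscal C1 x = x;
  hscal_assoc : forall a b x, hscal a (hscal b x) = hscal (Cmul a b) x;
  hscal_distr_v : forall a x y, hscal a (hadd x y) = hadd (hscal a x) (hscal a y);
  hscal_distr_s : forall a b x, hscal (Cadd a b) x = hadd (hscal a x) (hscal b x);
  hinner_add_l : forall x y z, hinner (hadd x y) z = Cadd (hinner x z) (hinner y z);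
  hinner_scal_l : forall a x y, hinner (hscal a x) y = Cmul a (hinner x y);
  hinner_conj : forall x y, hinner y x = Cconj (hinner x y);
  hinner_pos : forall x, 0 <= Re (hinner x x);
  hinner_def : forall x, hinner x x = C0 -> x = hzero;
  hcomplete : forall u : nat -> hs,
    (forall eps, eps > 0 -> exists N, forall m p, (m >= N)%nat -> (p >= N)%nat ->
        sqrt (Re (hinner (hadd (u m) (hopp (u p))) (hadd (u m) (hopp (u p))))) < eps) ->
    exists l, Un_cv (fun k =>
        sqrt (Re (hinner (hadd (u k) (hopp l)) (hadd (u k) (hopp l))))) 0
}.

Arguments hzero {c}.
Arguments hadd {c} _ _.
Arguments hopp {c} _.
Arguments hscal {c} _ _.
Arguments hinner {c} _ _.

Section HS.
Variable H : CHilbertSpace.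

Definition hsub (x y : H) : H := hadd x (hopp y).
Definition hnorm (x : H) : R := sqrt (Re (hinner x x)).

Fixpoint lincomb (c : nat -> complex) (v : nat -> H) (m : nat) : H :=
  match m with
  | O => @hzero H
  | S m' => hadd (lincomb c v m') (hscal (c m') (v m'))
  end.

Definition infinite_dimensional : Prop :=
  forall m : nat, exists v : nat -> H,
    forall c : nat -> complex, lincomb c v m = @hzero H ->
      forall i, (i < m)%nat -> c i = C0.

Definition separable : Prop :=
  exists d : nat -> H, forall x eps, eps > 0 -> exists k, hnorm (hsub x (d k)) < eps.

Definition linear_op (T : H -> H) : Prop :=
  (forall x y, T (hadd x y) = hadd (T x) (T y)) /\
  (forall a x, T (hscal a x) = hscal a (T x)).

Definition bounded_op (T : H -> H) : Prop :=
  linear_op T /\ exists M, forall x, hnorm (T x) <= M * hnorm x.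

Definition hcv (u : nat -> H) (l : H) : Prop :=
  Un_cv (fun k => hnorm (hsub (u k) l)) 0.

(** K in K(H): linear, and maps bounded sequences to sequences having a
    convergent subsequence (i.e. bounded sets to relatively compact sets) *)
Definition compact_op (K : H -> H) : Prop :=
  linear_op K /\
  forall u : nat -> H, (exists M, forall k, hnorm (u k) <= M) ->
    exists phi : nat -> nat, (forall k, (phi k < phi (S k))%nat) /\
      exists l, hcv (fun k => K (u (phi k))) l.

Definition orthonormal (x : nat -> H) : Prop :=
  forall i j, hinner (x i) (x j) = if Nat.eqb i j then C1 else C0.

Definition orthonormal_basis (u : nat -> H) : Prop :=
  orthonormal u /\ forall y, (forall k, hinner y (u k) = C0) -> y = @hzero H.

Definition tuple_add (n : nat) (T K : Fin.t n -> H -> H) : Fin.t n -> H -> H :=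
  fun j x => hadd (T j x) (K j x).

Definition ess_num_range (n : nat) (T : Fin.t n -> H -> H) (lam : Fin.t n -> complex) : Prop :=
  exists x : nat -> H, orthonormal x /\
    forall j, Ccv (fun k => hinner (T j (x k)) (x k)) (lam j).

Definition D_const (n : nat) (T : Fin.t n -> H -> H) (lam : Fin.t n -> complex) : Prop :=
  exists u : nat -> H, orthonormal_basis u /\
    forall k j, hinner (T j (u k)) (u k) = lam j.

End HS.

Arguments hsub {H} _ _.
Arguments hnorm {H} _.
Arguments lincomb {H} _ _ _.
Arguments linear_op {H} _.
Arguments bounded_op {H} _.
Arguments hcv {H} _ _.
Arguments compact_op {H} _.
Arguments orthonormal {H} _.
Arguments orthonormal_basis {H} _.
Arguments tuple_add {H n} _ _ _ _.
Arguments ess_num_range {H n} _ _.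
Arguments D_const {H n} _ _.

(* Main.v *)
Require Import Defs.
From Stdlib Require Import Reals Lra Lia Psatz Classical ClassicalEpsilon FunctionalExtensionality.
From Stdlib Require Fin.
From Stdlib Require Import ZArith.
Import Defs.
Open Scope R_scope.


Lemma Ceq (a b : complex) : Re a = Re b -> Im a = Im b -> a = b.
Proof. destruct a, b; simpl; intros; subst; reflexivity. Qed.

Ltac cring := apply Ceq; simpl; ring.

Lemma Cadd_comm a b : Cadd a b = Cadd b a. Proof. cring. Qed.
Lemma Cadd_assoc a b c : Cadd a (Cadd b c) = Cadd (Cadd a b) c. Proof. cring. Qed.
Lemma Cadd_0_r a : Cadd a C0 = a. Proof. cring. Qed.
Lemma Cadd_0_l a : Cadd C0 a = a. Proof. cring. Qed.
Lemma Cmul_comm a b : Cmul a b = Cmul b a. Proof. cring. Qed.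
Lemma Cmul_assoc a b c : Cmul a (Cmul b c) = Cmul (Cmul a b) c. Proof. cring. Qed.
Lemma Cmul_1_l a : Cmul C1 a = a. Proof. cring. Qed.
Lemma Cmul_1_r a : Cmul a C1 = a. Proof. cring. Qed.
Lemma Cmul_0_l a : Cmul C0 a = C0. Proof. cring. Qed.
Lemma Cmul_0_r a : Cmul a C0 = C0. Proof. cring. Qed.
Lemma Cmul_add_l a b c : Cmul (Cadd a b) c = Cadd (Cmul a c) (Cmul b c). Proof. cring. Qed.
Lemma Cmul_add_r a b c : Cmul a (Cadd b c) = Cadd (Cmul a b) (Cmul a c). Proof. cring. Qed.
Lemma Cconj_add a b : Cconj (Cadd a b) = Cadd (Cconj a) (Cconj b). Proof. cring. Qed.
Lemma Cconj_mul a b : Cconj (Cmul a b) = Cmul (Cconj a) (Cconj b). Proof. cring. Qed.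
Lemma Cconj_conj a : Cconj (Cconj a) = a. Proof. cring. Qed.
Lemma Cconj_0 : Cconj C0 = C0. Proof. cring. Qed.
Lemma Csub_diag a : Csub a a = C0. Proof. cring. Qed.

Definition RtoC (r : R) : complex := mkC r 0.

Lemma Cmod_sq a : Cmod a * Cmod a = Re a * Re a + Im a * Im a.
Proof. unfold Cmod. rewrite sqrt_sqrt; nra. Qed.
Lemma Cmod_ge_0 a : 0 <= Cmod a.
Proof. apply sqrt_pos. Qed.
Lemma Cmod_le_sq a r : 0 <= r -> Re a * Re a + Im a * Im a <= r * r -> Cmod a <= r.
Proof. intros. unfold Cmod. rewrite <- (sqrt_square r) by lra. apply sqrt_le_1_alt. lra. Qed.
Lemma Cmod_mul a b : Cmod (Cmul a b) = Cmod a * Cmod b.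
Proof.
  unfold Cmod. rewrite <- sqrt_mult by nra. f_equal. destruct a, b; simpl. ring.
Qed.
Lemma Cmod_conj a : Cmod (Cconj a) = Cmod a.
Proof. unfold Cmod. destruct a; simpl. f_equal. ring. Qed.
Lemma Cmod_0 : Cmod C0 = 0.
Proof. unfold Cmod; simpl. replace (0*0+0*0) with 0 by ring. apply sqrt_0. Qed.
Lemma Cmod_eq_0 a : Cmod a = 0 -> a = C0.
Proof.
  intros h. pose proof (Cmod_sq a). rewrite h in H. apply Ceq; simpl; nra.
Qed.
Lemma Rabs_le_sq x c : 0 <= c -> x * x <= c * c -> Rabs x <= c.
Proof. intros. unfold Rabs; destruct (Rcase_abs x); nra. Qed.
Lemma Re_le_Cmod a : Rabs (Re a) <= Cmod a.
Proof.
  pose proof (Cmod_sq a). pose proof (Cmod_ge_0 a).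
  apply Rabs_le_sq; nra.
Qed.
Lemma Im_le_Cmod a : Rabs (Im a) <= Cmod a.
Proof.
  pose proof (Cmod_sq a). pose proof (Cmod_ge_0 a).
  apply Rabs_le_sq; nra.
Qed.
Lemma Cmod_add a b : Cmod (Cadd a b) <= Cmod a + Cmod b.
Proof.
  pose proof (Cmod_sq a) as Ha; pose proof (Cmod_sq b) as Hb.
  pose proof (Cmod_ge_0 a) as Ga; pose proof (Cmod_ge_0 b) as Gb.
  apply Cmod_le_sq. lra.
  set (x := Cmod a) in *. set (y := Cmod b) in *.
  clearbody x y.
  destruct a as [p q], b as [r s]; simpl in *.
  assert (E : (p*r+q*s)*(p*r+q*s) <= (x*y)*(x*y)).
  { replace ((x*y)*(x*y)) with ((x*x)*(y*y)) by ring. rewrite Ha, Hb. pose proof (Rle_0_sqr (p*s-q*r)). unfold Rsqr in *. nra. }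
  assert (XY : 0 <= x*y) by (apply Rmult_le_pos; auto).
  assert (p*r+q*s <= x*y).
  { destruct (Rle_dec (p*r+q*s) (x*y)) as [h|h]; auto. exfalso.
    apply Rnot_le_lt in h. assert ((x*y)*(x*y) < (p*r+q*s)*(p*r+q*s)).
    { apply Rmult_le_0_lt_compat; lra. } lra. }
  simpl. assert (EE : (p + r) * (p + r) + (q + s) * (q + s) = x*x + y*y + 2*(p*r+q*s)) by (rewrite Ha, Hb; ring).
  rewrite EE. replace ((x + y) * (x + y)) with (x*x+y*y+2*(x*y)) by ring. lra.
Qed.
Lemma Cmod_opp a : Cmod (Copp a) = Cmod a.
Proof. unfold Cmod; destruct a; simpl; apply f_equal; ring. Qed.
Lemma Cmod_sub_sym a b : Cmod (Csub a b) = Cmod (Csub b a).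
Proof. unfold Cmod; destruct a, b; simpl; apply f_equal; ring. Qed.
Lemma Cmod_RtoC r : Cmod (RtoC r) = Rabs r.
Proof. unfold Cmod, RtoC; simpl. rewrite <- sqrt_Rsqr_abs. f_equal. unfold Rsqr; ring. Qed.
Lemma Cmod_sub_tri a b c : Cmod (Csub a c) <= Cmod (Csub a b) + Cmod (Csub b c).
Proof.
  replace (Csub a c) with (Cadd (Csub a b) (Csub b c)) by cring. apply Cmod_add.
Qed.


Section HB.
Context {H : CHilbertSpace}.
Implicit Types x y z : H.

Lemma hadd_0_l x : hadd hzero x = x.
Proof. rewrite hadd_comm. apply hadd_0. Qed.

Lemma hadd_cancel_l x y z : hadd x y = hadd x z -> y = z.
Proof.
  intros E. transitivity (hadd (hadd (hopp x) x) y).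
  - rewrite (hadd_comm _ (hopp x) x), hadd_opp, hadd_0_l. reflexivity.
  - rewrite <- hadd_assoc, E, hadd_assoc, (hadd_comm _ (hopp x) x), hadd_opp, hadd_0_l. reflexivity.
Qed.

Lemma hadd_self_0 x : hadd x x = x -> x = hzero.
Proof. intros E. apply (hadd_cancel_l x). rewrite E, hadd_0. reflexivity. Qed.

Lemma hscal_0 x : hscal C0 x = hzero.
Proof.
  apply hadd_self_0. rewrite <- hscal_distr_s. f_equal. cring.
Qed.

Lemma hscal_zero a : hscal a (@hzero H) = hzero.
Proof.
  apply hadd_self_0. rewrite <- hscal_distr_v, hadd_0. reflexivity.
Qed.

Definition Cm1 : complex := mkC (-1) 0.

Lemma hopp_scal x : hopp x = hscal Cm1 x.
Proof.
  apply (hadd_cancel_l x). rewrite hadd_opp.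
  rewrite <- (hscal_1 _ x) at 1. rewrite <- hscal_distr_s.
  replace (Cadd C1 Cm1) with C0 by cring. rewrite hscal_0. reflexivity.
Qed.

Lemma hinner_0_l y : hinner (@hzero H) y = C0.
Proof. rewrite <- (hscal_0 hzero), hinner_scal_l. apply Cmul_0_l. Qed.

Lemma hinner_0_r y : hinner y (@hzero H) = C0.
Proof. rewrite hinner_conj, hinner_0_l. apply Cconj_0. Qed.

Lemma hinner_add_r x y z : hinner x (hadd y z) = Cadd (hinner x y) (hinner x z).
Proof.
  rewrite hinner_conj, hinner_add_l, Cconj_add, <- !hinner_conj. reflexivity.
Qed.

Lemma hinner_scal_r a x y : hinner x (hscal a y) = Cmul (Cconj a) (hinner x y).
Proof.
  rewrite hinner_conj, hinner_scal_l, Cconj_mul, <- hinner_conj. reflexivity.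
Qed.

Lemma hinner_opp_l x y : hinner (hopp x) y = Copp (hinner x y).
Proof. rewrite hopp_scal, hinner_scal_l. cring. Qed.
Lemma hinner_opp_r x y : hinner x (hopp y) = Copp (hinner x y).
Proof. rewrite hopp_scal, hinner_scal_r. cring. Qed.
Lemma hinner_sub_l x y z : hinner (hsub x y) z = Csub (hinner x z) (hinner y z).
Proof. unfold hsub. rewrite hinner_add_l, hinner_opp_l. reflexivity. Qed.
Lemma hinner_sub_r x y z : hinner x (hsub y z) = Csub (hinner x y) (hinner x z).
Proof. unfold hsub. rewrite hinner_add_r, hinner_opp_r. reflexivity. Qed.

Lemma Im_inner_self x : Im (hinner x x) = 0.
Proof.
  pose proof (hinner_conj _ x x) as E. destruct (hinner x x) as [p q]. unfold Cconj in E.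
  simpl in *. injection E. lra.
Qed.

Lemma inner_self_eq x : hinner x x = RtoC (Re (hinner x x)).
Proof. apply Ceq; simpl; auto. apply Im_inner_self. Qed.

Lemma hnorm_sq x : hnorm x * hnorm x = Re (hinner x x).
Proof. unfold hnorm. apply sqrt_sqrt. apply hinner_pos. Qed.

Lemma hnorm_pos x : 0 <= hnorm x.
Proof. apply sqrt_pos. Qed.

Lemma hnorm_zero x : hnorm x = 0 -> x = hzero.
Proof.
  intros E. apply hinner_def. pose proof (hnorm_sq x). rewrite E in H0.
  apply Ceq; simpl. lra. apply Im_inner_self.
Qed.

Lemma hnorm_0 : hnorm (@hzero H) = 0.
Proof. unfold hnorm. rewrite hinner_0_l. simpl. apply sqrt_0. Qed.

Lemma Re_inner_add_scal x y a :
  Re (hinner (hadd x (hscal a y)) (hadd x (hscal a y))) =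
  Re (hinner x x) + 2 * (Re a * Re (hinner y x) - Im a * Im (hinner y x))
  + (Re a * Re a + Im a * Im a) * Re (hinner y y).
Proof.
  rewrite !hinner_add_l, !hinner_add_r, !hinner_scal_l, !hinner_scal_r.
  rewrite (hinner_conj _ x y). pose proof (Im_inner_self y) as Iy.
  destruct (hinner y x) as [p q]; destruct a as [s t]; destruct (hinner y y) as [r w].
  simpl in *. rewrite Iy. ring.
Qed.

Lemma cauchy_schwarz_sq x y :
  Cmod (hinner x y) * Cmod (hinner x y) <= Re (hinner x x) * Re (hinner y y).
Proof.
  rewrite Cmod_sq.
  pose proof (hinner_pos _ y) as Py. pose proof (hinner_pos _ x) as Px.
  destruct (Req_dec (Re (hinner y y)) 0) as [Z|NZ].
  - assert (y = hzero). { apply hinner_def. apply Ceq; simpl; auto. apply Im_inner_self. }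
    subst. rewrite hinner_0_r. simpl. nra.
  - set (N := Re (hinner y y)) in *.
    pose proof (hinner_pos _ (hadd x (hscal (mkC (- Re (hinner y x) / N) (Im (hinner y x) / N)) y))) as P.
    rewrite Re_inner_add_scal in P. simpl in P. fold N in P.
    rewrite (hinner_conj _ y x). simpl.
    set (p := Re (hinner y x)) in *. set (q := Im (hinner y x)) in *.
    assert (Np : 0 < N) by lra.
    assert (P2 : 0 <= Re (hinner x x) * N - (p*p+q*q)).
    { replace (Re (hinner x x) * N - (p*p+q*q)) with
        (N * (Re (hinner x x) + 2 * (- p / N * p - q / N * q) + (- p / N * (- p / N) + q / N * (q / N)) * N))
        by (field; lra).
      apply Rmult_le_pos; lra. }
    nra.
Qed.

Lemma cauchy_schwarz x y : Cmod (hinner x y) <= hnorm x * hnorm y.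
Proof.
  pose proof (cauchy_schwarz_sq x y). rewrite <- !hnorm_sq in H0.
  pose proof (Cmod_ge_0 (hinner x y)). pose proof (hnorm_pos x). pose proof (hnorm_pos y).
  destruct (Rle_dec (Cmod (hinner x y)) (hnorm x * hnorm y)) as [h|h]; auto.
  apply Rnot_le_lt in h. exfalso.
  assert (hnorm x * hnorm y * (hnorm x * hnorm y) < Cmod (hinner x y) * Cmod (hinner x y)).
  { apply Rmult_le_0_lt_compat; auto. apply Rmult_le_pos; auto. apply Rmult_le_pos; auto. }
  lra.
Qed.

Lemma hnorm_le_sq x r : 0 <= r -> Re (hinner x x) <= r * r -> hnorm x <= r.
Proof. intros. unfold hnorm. rewrite <- (sqrt_square r) by lra. apply sqrt_le_1_alt. auto. Qed.

Lemma hnorm_add x y : hnorm (hadd x y) <= hnorm x + hnorm y.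
Proof.
  pose proof (hnorm_pos x); pose proof (hnorm_pos y).
  apply hnorm_le_sq. lra.
  rewrite <- (hscal_1 _ y) at 1 2. rewrite Re_inner_add_scal. simpl.
  pose proof (cauchy_schwarz y x). pose proof (Re_le_Cmod (hinner y x)).
  pose proof (Rle_abs (Re (hinner y x))).
  rewrite <- !hnorm_sq. nra.
Qed.

Lemma hnorm_scal a x : hnorm (hscal a x) = Cmod a * hnorm x.
Proof.
  unfold hnorm, Cmod. rewrite <- sqrt_mult. f_equal.
  rewrite hinner_scal_l, hinner_scal_r. pose proof (Im_inner_self x).
  destruct a as [s t]; destruct (hinner x x) as [r w]; simpl in *. subst. ring.
  nra. apply hinner_pos.
Qed.

Lemma hnorm_opp x : hnorm (hopp x) = hnorm x.
Proof. rewrite hopp_scal, hnorm_scal. replace Cm1 with (RtoC (-1)) by reflexivity. rewrite (Cmod_RtoC (-1)). rewrite Rabs_left by lra. ring. Qed.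

Lemma hopp_add x y : hopp (hadd x y) = hadd (hopp x) (hopp y).
Proof. rewrite !hopp_scal. apply hscal_distr_v. Qed.
Lemma hopp_opp x : hopp (hopp x) = x.
Proof. rewrite !hopp_scal, hscal_assoc. replace (Cmul Cm1 Cm1) with C1 by cring. apply hscal_1. Qed.

Lemma hsub_sym_norm x y : hnorm (hsub x y) = hnorm (hsub y x).
Proof.
  rewrite <- hnorm_opp. unfold hsub. rewrite hopp_add, hopp_opp, hadd_comm. reflexivity.
Qed.

Lemma hsub_add x y z : hadd (hsub x y) (hsub y z) = hsub x z.
Proof.
  unfold hsub. rewrite <- hadd_assoc, (hadd_assoc _ (hopp y)), (hadd_comm _ (hopp y) y), hadd_opp, hadd_0_l.
  reflexivity.
Qed.

Lemma hnorm_sub_tri x y z : hnorm (hsub x z) <= hnorm (hsub x y) + hnorm (hsub y z).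
Proof. rewrite <- (hsub_add x y z). apply hnorm_add. Qed.

Lemma hsub_diag x : hsub x x = hzero.
Proof. apply hadd_opp. Qed.

Lemma hsub_0 x : hsub x hzero = x.
Proof. unfold hsub. rewrite hopp_scal, hscal_zero. apply hadd_0. Qed.

Lemma hnorm_sub_ge x y : hnorm x - hnorm y <= hnorm (hsub x y).
Proof.
  pose proof (hnorm_sub_tri x y hzero). rewrite !hsub_0 in H0. lra.
Qed.

End HB.


Fixpoint Csum (f : nat -> complex) (n : nat) : complex :=
  match n with O => C0 | S m => Cadd (Csum f m) (f m) end.
Fixpoint Rsum (f : nat -> R) (n : nat) : R :=
  match n with O => 0 | S m => Rsum f m + f m end.

Lemma Csum_ext f g n : (forall i, (i < n)%nat -> f i = g i) -> Csum f n = Csum g n.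
Proof. induction n; simpl; intros; auto. rewrite IHn by (intros; apply H; lia). rewrite H by lia. auto. Qed.
Lemma Rsum_ext f g n : (forall i, (i < n)%nat -> f i = g i) -> Rsum f n = Rsum g n.
Proof. induction n; simpl; intros; auto. rewrite IHn by (intros; apply H; lia). rewrite H by lia. auto. Qed.
Lemma Rsum_le f g n : (forall i, (i < n)%nat -> f i <= g i) -> Rsum f n <= Rsum g n.
Proof. induction n; simpl; intros; [lra|]. pose proof (H n ltac:(lia)). pose proof (IHn ltac:(intros; apply H; lia)). lra. Qed.
Lemma Rsum_nonneg f n : (forall i, (i < n)%nat -> 0 <= f i) -> 0 <= Rsum f n.
Proof. induction n; simpl; intros; [lra|]. pose proof (H n ltac:(lia)). pose proof (IHn ltac:(intros; apply H; lia)). lra. Qed.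
Lemma Rsum_const c n : Rsum (fun _ => c) n = INR n * c.
Proof. induction n; simpl Rsum; [simpl; ring|]. rewrite IHn, S_INR. ring. Qed.
Lemma Rsum_scal c f n : Rsum (fun i => c * f i) n = c * Rsum f n.
Proof. induction n; simpl; [ring|]. rewrite IHn; ring. Qed.
Lemma Rsum_add f g n : Rsum (fun i => f i + g i) n = Rsum f n + Rsum g n.
Proof. induction n; simpl; [ring|]. rewrite IHn; ring. Qed.
Lemma Csum_add f g n : Csum (fun i => Cadd (f i) (g i)) n = Cadd (Csum f n) (Csum g n).
Proof. induction n; simpl; [cring|]. rewrite IHn; cring. Qed.
Lemma Csum_scal c f n : Csum (fun i => Cmul c (f i)) n = Cmul c (Csum f n).
Proof. induction n; simpl; [cring|]. rewrite IHn; cring. Qed.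
Lemma Csum_conj f n : Cconj (Csum f n) = Csum (fun i => Cconj (f i)) n.
Proof. induction n; simpl; [cring|]. rewrite Cconj_add, IHn; auto. Qed.
Lemma Csum_Re f n : Re (Csum f n) = Rsum (fun i => Re (f i)) n.
Proof. induction n; simpl; auto. rewrite IHn; auto. Qed.
Lemma Csum_Im f n : Im (Csum f n) = Rsum (fun i => Im (f i)) n.
Proof. induction n; simpl; auto. rewrite IHn; auto. Qed.
Lemma Cmod_Csum f n : Cmod (Csum f n) <= Rsum (fun i => Cmod (f i)) n.
Proof. induction n; simpl. rewrite Cmod_0; lra. pose proof (Cmod_add (Csum f n) (f n)). lra. Qed.
Lemma Csum_zero n : Csum (fun _ => C0) n = C0.
Proof. induction n; simpl; auto. rewrite IHn; cring. Qed.
Lemma Csum_delta f n k : (k < n)%nat -> Csum (fun i => if Nat.eqb i k then f i else C0) n = f k.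
Proof.
  induction n; intros; [lia|]. simpl. destruct (Nat.eqb n k) eqn:E.
  - apply Nat.eqb_eq in E. subst. rewrite (Csum_ext _ (fun _ => C0)). 
    + rewrite Csum_zero. cring.
    + intros i Hi. destruct (Nat.eqb i k) eqn:E2; auto. apply Nat.eqb_eq in E2; lia.
  - apply Nat.eqb_neq in E. rewrite IHn by lia. cring.
Qed.
Lemma Rsum_split f n m : Rsum f (n + m) = Rsum f n + Rsum (fun i => f (n + i)%nat) m.
Proof. induction m; simpl. rewrite Nat.add_0_r; ring. rewrite Nat.add_succ_r. simpl. rewrite IHm. ring. Qed.
Lemma Csum_split f n m : Csum f (n + m) = Cadd (Csum f n) (Csum (fun i => f (n + i)%nat) m).
Proof. induction m; simpl. rewrite Nat.add_0_r; cring. rewrite Nat.add_succ_r. simpl. rewrite IHm. cring. Qed.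
Lemma Csum_swap (f : nat -> nat -> complex) n m :
  Csum (fun i => Csum (fun j => f i j) m) n = Csum (fun j => Csum (fun i => f i j) n) m.
Proof.
  induction n; simpl.
  - clear. induction m; simpl; [auto|]. rewrite <- IHm. cring.
  - rewrite IHn. rewrite <- Csum_add. auto.
Qed.

Section HC.
Context {H : CHilbertSpace}.

Definition forth (v : nat -> H) (m : nat) : Prop :=
  forall i j, (i < m)%nat -> (j < m)%nat -> hinner (v i) (v j) = if Nat.eqb i j then C1 else C0.

Lemma lincomb_ext c d (v w : nat -> H) m :
  (forall i, (i < m)%nat -> c i = d i /\ v i = w i) -> lincomb c v m = lincomb d w m.
Proof. induction m; simpl; intros; auto. destruct (H0 m ltac:(lia)) as [-> ->]. rewrite IHm; auto. Qed.

Lemma inner_lincomb_l c (v : nat -> H) m y :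
  hinner (lincomb c v m) y = Csum (fun i => Cmul (c i) (hinner (v i) y)) m.
Proof. induction m; simpl. apply hinner_0_l. rewrite hinner_add_l, IHm, hinner_scal_l. auto. Qed.

Lemma inner_lincomb_r c (v : nat -> H) m y :
  hinner y (lincomb c v m) = Csum (fun i => Cmul (Cconj (c i)) (hinner y (v i))) m.
Proof. induction m; simpl. apply hinner_0_r. rewrite hinner_add_r, IHm, hinner_scal_r. auto. Qed.

Lemma lincomb_orth_coef c v m k : forth v m -> (k < m)%nat -> hinner (lincomb c v m) (v k) = c k.
Proof.
  intros O Hk. rewrite inner_lincomb_l.
  rewrite (Csum_ext _ (fun i => if Nat.eqb i k then c i else C0)).
  - apply Csum_delta; auto.
  - intros i Hi. rewrite O by auto. destruct (Nat.eqb i k); cring.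
Qed.

Lemma lincomb_orth_inner c d v m : forth v m ->
  hinner (lincomb c v m) (lincomb d v m) = Csum (fun i => Cmul (c i) (Cconj (d i))) m.
Proof.
  intros O. rewrite inner_lincomb_r.
  apply Csum_ext. intros i Hi. rewrite lincomb_orth_coef by auto.
  apply Cmul_comm.
Qed.

Lemma lincomb_orth_nsq c v m : forth v m ->
  Re (hinner (lincomb c v m) (lincomb c v m)) = Rsum (fun i => Cmod (c i) * Cmod (c i)) m.
Proof.
  intros O. rewrite lincomb_orth_inner, Csum_Re by auto. apply Rsum_ext. intros. rewrite Cmod_sq.
  destruct (c i); simpl; ring.
Qed.

Lemma lincomb_linear (T : H -> H) c v m : linear_op T ->
  T (lincomb c v m) = lincomb c (fun i => T (v i)) m.
Proof.
  intros [Ha Hs]. induction m; simpl.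
  - rewrite <- (hscal_0 hzero), Hs, !hscal_0. auto.
  - rewrite Ha, Hs, IHm. auto.
Qed.

Definition proj (v : nat -> H) m (x : H) : H := lincomb (fun i => hinner x (v i)) v m.

Lemma proj_orth v m x k : forth v m -> (k < m)%nat -> hinner (hsub x (proj v m x)) (v k) = C0.
Proof.
  intros O Hk. rewrite hinner_sub_l. unfold proj. rewrite lincomb_orth_coef by auto. apply Csub_diag.
Qed.

Lemma orth_lincomb_r (y : H) c (v : nat -> H) m : (forall k, (k < m)%nat -> hinner y (v k) = C0) ->
  hinner y (lincomb c v m) = C0.
Proof. intros Z. rewrite inner_lincomb_r. induction m; simpl; auto. rewrite IHm, Z by (auto; lia). cring. Qed.

Lemma pythag (x y : H) : hinner x y = C0 ->
  Re (hinner (hadd x y) (hadd x y)) = Re (hinner x x) + Re (hinner y y).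
Proof.
  intros Z. rewrite <- (hscal_1 _ y) at 1 2. rewrite Re_inner_add_scal. simpl.
  rewrite (hinner_conj _ x y), Z. simpl. ring.
Qed.

Lemma hadd_sub_cancel (x y : H) : hadd y (hsub x y) = x.
Proof. unfold hsub. rewrite hadd_comm, <- hadd_assoc, (hadd_comm _ (hopp y)), hadd_opp, hadd_0. auto. Qed.

Lemma proj_nsq v m x : forth v m ->
  Re (hinner x x) = Re (hinner (proj v m x) (proj v m x)) + Re (hinner (hsub x (proj v m x)) (hsub x (proj v m x))).
Proof.
  intros O. rewrite <- pythag. rewrite hadd_sub_cancel. auto.
  rewrite hinner_conj. unfold proj at 2. rewrite orth_lincomb_r. apply Cconj_0.
  intros; apply proj_orth; auto.
Qed.

Lemma bessel v m x : forth v m ->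
  Rsum (fun i => Cmod (hinner x (v i)) * Cmod (hinner x (v i))) m <= Re (hinner x x).
Proof.
  intros O. rewrite (proj_nsq v m x O). unfold proj at 1 2. rewrite lincomb_orth_nsq by auto.
  pose proof (hinner_pos _ (hsub x (proj v m x))). lra.
Qed.

Lemma forth_le v m m' : forth v m -> (m' <= m)%nat -> forth v m'.
Proof. intros O Hm i j Hi Hj. apply O; lia. Qed.

Lemma orthonormal_forth (u : nat -> H) g m : orthonormal u -> (forall i j, (i < m)%nat -> (j < m)%nat -> g i = g j -> i = j) ->
  forth (fun i => u (g i)) m.
Proof.
  intros O Inj i j Hi Hj. rewrite O. destruct (Nat.eqb i j) eqn:E1, (Nat.eqb (g i) (g j)) eqn:E2; auto.
  - apply Nat.eqb_eq in E1; apply Nat.eqb_neq in E2; subst; congruence.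
  - apply Nat.eqb_neq in E1; apply Nat.eqb_eq in E2. apply Inj in E2; auto. congruence.
Qed.

End HC.


Lemma io_subseq (P : nat -> Prop) : (forall N, exists k, (N <= k)%nat /\ P k) ->
  exists g : nat -> nat, (forall i, (g i < g (S i))%nat) /\ forall i, P (g i).
Proof.
  intros Hio.
  set (pick := fun N => proj1_sig (constructive_indefinite_description _ (Hio N))).
  assert (Hp : forall N, (N <= pick N)%nat /\ P (pick N)).
  { intros N. unfold pick. destruct (constructive_indefinite_description _ (Hio N)); auto. }
  exists (fix g i := match i with O => pick O | S j => pick (S (g j)) end).
  split.
  - intros i. simpl. destruct (Hp (S ((fix g (i0 : nat) : nat := match i0 with
                                       | 0%nat => pick 0%nat | S j => pick (S (g j)) end) i))). lia.
  - intros [|i]; apply Hp.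
Qed.

Lemma exists_nat_gt r : exists N, r < INR N.
Proof.
  destruct (Rle_or_lt r 0) as [h|h]. exists 1%nat. simpl. lra.
  pose proof (archimed r) as [A1 A2]. exists (Z.to_nat (up r)).
  rewrite INR_IZR_INZ, Z2Nat.id. lra. apply le_IZR. lra.
Qed.

Lemma strict_incr_ge (g : nat -> nat) : (forall i, (g i < g (S i))%nat) -> forall i, (i <= g i)%nat.
Proof. intros Hg i; induction i; [lia|]. specialize (Hg i). lia. Qed.

Lemma strict_incr_lt (g : nat -> nat) : (forall i, (g i < g (S i))%nat) -> forall i j, (i < j)%nat -> (g i < g j)%nat.
Proof.
  intros Hg i j Hij. induction j; [lia|]. destruct (Nat.eq_dec i j). subst; auto.
  specialize (IHj ltac:(lia)). specialize (Hg j). lia.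
Qed.

Lemma strict_incr_inj (g : nat -> nat) : (forall i, (g i < g (S i))%nat) -> forall i j, g i = g j -> i = j.
Proof.
  intros Hg i j E. destruct (Nat.lt_trichotomy i j) as [h|[h|h]]; auto.
  - pose proof (strict_incr_lt g Hg i j h). lia.
  - pose proof (strict_incr_lt g Hg j i h). lia.
Qed.

Lemma not_eventually_io (P : nat -> Prop) : ~ (exists N, forall k, (N <= k)%nat -> P k) ->
  forall N, exists k, (N <= k)%nat /\ ~ P k.
Proof.
  intros NE N. apply NNPP. intros C. apply NE. exists N. intros k Hk. apply NNPP. intros np. apply C. eauto.
Qed.

Lemma orthonormal_comp {H : CHilbertSpace} (u : nat -> H) g : orthonormal u -> (forall i, (g i < g (S i))%nat) ->
  orthonormal (fun i => u (g i)).
Proof.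
  intros O Hg i j. rewrite O. destruct (Nat.eqb i j) eqn:E1, (Nat.eqb (g i) (g j)) eqn:E2; auto.
  - apply Nat.eqb_eq in E1; apply Nat.eqb_neq in E2; subst; congruence.
  - apply Nat.eqb_neq in E1; apply Nat.eqb_eq in E2. apply strict_incr_inj in E2; auto. congruence.
Qed.

Lemma orthonormal_norm {H : CHilbertSpace} (u : nat -> H) k : orthonormal u -> hnorm (u k) = 1.
Proof. intros O. unfold hnorm. rewrite O, Nat.eqb_refl. simpl. apply sqrt_1. Qed.

Section HD.
Context {H : CHilbertSpace}.

Definition clinear (f : H -> complex) : Prop :=
  (forall x y, f (hadd x y) = Cadd (f x) (f y)) /\ (forall a x, f (hscal a x) = Cmul a (f x)).

Lemma clinear_lincomb f c v m : clinear f -> f (lincomb c v m) = Csum (fun i => Cmul (c i) (f (v i))) m.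
Proof.
  intros [Ha Hs]. induction m; simpl.
  - rewrite <- (hscal_0 hzero), Hs. apply Cmul_0_l.
  - rewrite Ha, Hs, IHm. auto.
Qed.

Lemma func_null (f : H -> complex) M (u : nat -> H) :
  clinear f -> (forall x, Cmod (f x) <= M * hnorm x) -> orthonormal u ->
  forall eps, eps > 0 -> exists N, forall k, (N <= k)%nat -> Cmod (f (u k)) < eps.
Proof.
  intros Lf Bf Ou eps Heps. apply NNPP. intros NE.
  pose proof (not_eventually_io _ NE) as IO.
  destruct (io_subseq (fun k => ~ Cmod (f (u k)) < eps) IO) as [g [Hg Pg]].
  assert (Pg' : forall i, eps <= Cmod (f (u (g i)))) by (intros i; apply Rnot_lt_le, Pg).
  assert (M0 : 0 <= M).
  { pose proof (Bf (u 0%nat)). rewrite orthonormal_norm in H0 by auto. pose proof (Cmod_ge_0 (f (u 0%nat))). lra. }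
  destruct (exists_nat_gt (M * M / (eps * eps))) as [N0 HN0].
  set (N := S N0).
  assert (NR : M * M / (eps * eps) < INR N).
  { unfold N. rewrite S_INR. lra. }
  set (fi := fun i => f (u (g i))).
  set (c := fun i => Cmul (RtoC (/ Cmod (fi i))) (Cconj (fi i))).
  set (x := lincomb c (fun i => u (g i)) N).
  assert (Hfi : forall i, 0 < Cmod (fi i)) by (intros; unfold fi; specialize (Pg' i); lra).
  assert (Fx : Re (f x) = Rsum (fun i => Cmod (fi i)) N).
  { unfold x. rewrite clinear_lincomb, Csum_Re by auto. apply Rsum_ext. intros i _.
    unfold c. fold (fi i). pose proof (Hfi i) as Hm. pose proof (Cmod_sq (fi i)) as Hs.
    set (m := Cmod (fi i)) in *. clearbody m. destruct (fi i) as [p q]. simpl in Hs |- *.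
    replace ((/ m * p - 0 * - q) * p - (/ m * - q + 0 * p) * q) with (/ m * (p * p + q * q)) by ring.
    rewrite <- Hs. field. lra. }
  assert (FN : INR N * eps <= Re (f x)).
  { rewrite Fx, <- Rsum_const. apply Rsum_le. intros; apply Pg'. }
  assert (Nx : Re (hinner x x) = INR N).
  { unfold x. rewrite lincomb_orth_nsq. rewrite <- (Rmult_1_r (INR N)), <- Rsum_const. apply Rsum_ext.
    intros i _. unfold c. rewrite Cmod_mul, Cmod_conj, Cmod_RtoC. pose proof (Hfi i).
    rewrite Rabs_right by (apply Rle_ge, Rlt_le, Rinv_0_lt_compat; auto). field. lra.
    intros i j Hi Hj. apply orthonormal_comp; auto. }
  pose proof (Bf x) as Bx. pose proof (Re_le_Cmod (f x)). pose proof (Rle_abs (Re (f x))).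
  assert (INR N * eps <= M * hnorm x) by lra.
  assert (Ne : 0 < INR N) by (unfold N; rewrite S_INR; pose proof (pos_INR N0); lra).
  assert ((INR N * eps) * (INR N * eps) <= (M * hnorm x) * (M * hnorm x)).
  { apply Rmult_le_compat; nra. }
  replace ((M * hnorm x) * (M * hnorm x)) with (M * M * (hnorm x * hnorm x)) in H3 by ring.
  rewrite hnorm_sq, Nx in H3.
  assert (INR N * (eps * eps) <= M * M) by nra.
  assert (M * M / (eps * eps) * (eps * eps) = M * M) by (field; lra).
  assert (M * M / (eps * eps) * (eps * eps) < INR N * (eps * eps)) by (apply Rmult_lt_compat_r; nra).
  lra.
Qed.

End HD.


Section HE.
Context {H : CHilbertSpace}.

Lemma hcv_eps (u : nat -> H) l : hcv u l -> forall eps, eps > 0 -> exists N, forall k, (N <= k)%nat -> hnorm (hsub (u k) l) < eps.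
Proof.
  intros C eps He. destruct (C eps He) as [N HN]. exists N. intros k Hk. specialize (HN k Hk).
  unfold R_dist in HN. rewrite Rminus_0_r, Rabs_right in HN; auto. apply Rle_ge, hnorm_pos.
Qed.

Lemma eps_hcv (u : nat -> H) l : (forall eps, eps > 0 -> exists N, forall k, (N <= k)%nat -> hnorm (hsub (u k) l) < eps) -> hcv u l.
Proof.
  intros C eps He. destruct (C eps He) as [N HN]. exists N. intros k Hk. specialize (HN k Hk).
  unfold R_dist. rewrite Rminus_0_r, Rabs_right; auto. apply Rle_ge, hnorm_pos.
Qed.

Lemma lin_zero (K : H -> H) : linear_op K -> K hzero = hzero.
Proof. intros [Ha Hs]. rewrite <- (hscal_0 hzero), Hs, !hscal_0. auto. Qed.

Lemma compact_bounded (K : H -> H) : compact_op K -> exists M, forall x, hnorm (K x) <= M * hnorm x.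
Proof.
  intros [L Cp]. apply NNPP. intros NB.
  assert (NB' : forall i : nat, exists x, INR i * hnorm x < hnorm (K x)).
  { intros i. apply NNPP. intros C. apply NB. exists (INR i). intros x.
    apply Rnot_lt_le. intros h. apply C. eauto. }
  set (xs := fun i => proj1_sig (constructive_indefinite_description _ (NB' i))).
  assert (Hxs : forall i, INR i * hnorm (xs i) < hnorm (K (xs i))).
  { intros i. unfold xs. destruct (constructive_indefinite_description _ (NB' i)); auto. }
  assert (Nz : forall i, 0 < hnorm (xs i)).
  { intros i. pose proof (hnorm_pos (xs i)). destruct (Req_dec (hnorm (xs i)) 0) as [E|E]; [|lra].
    apply hnorm_zero in E. specialize (Hxs i). rewrite E, lin_zero, hnorm_0 in Hxs; auto. lra. }
  set (v := fun i => hscal (RtoC (/ hnorm (xs i))) (xs i)).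
  assert (Nv : forall i, hnorm (v i) = 1).
  { intros i. unfold v. rewrite hnorm_scal, Cmod_RtoC, Rabs_right. field. specialize (Nz i); lra.
    apply Rle_ge, Rlt_le, Rinv_0_lt_compat; auto. }
  assert (KV : forall i, INR i < hnorm (K (v i))).
  { intros i. unfold v. destruct L as [La Ls]. rewrite Ls, hnorm_scal, Cmod_RtoC, Rabs_right.
    specialize (Hxs i). specialize (Nz i). apply (Rmult_lt_reg_l (hnorm (xs i))); auto.
    field_simplify; lra. apply Rle_ge, Rlt_le, Rinv_0_lt_compat; auto. }
  destruct (Cp v) as [phi [Hphi [l Hl]]].
  { exists 1. intros; rewrite Nv; lra. }
  destruct (hcv_eps _ _ Hl 1 ltac:(lra)) as [N HN].
  destruct (exists_nat_gt (hnorm l + 1)) as [m Hm].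
  specialize (HN (max N m) ltac:(lia)).
  pose proof (hnorm_sub_ge (K (v (phi (max N m)))) l).
  pose proof (KV (phi (max N m))).
  pose proof (strict_incr_ge phi Hphi (max N m)).
  apply le_INR in H2. pose proof (le_INR m (max N m) ltac:(lia)). lra.
Qed.

Lemma compact_null (K : H -> H) (u : nat -> H) : compact_op K -> orthonormal u ->
  forall eps, eps > 0 -> exists N, forall k, (N <= k)%nat -> hnorm (K (u k)) < eps.
Proof.
  intros Cp Ou eps He. apply NNPP. intros NE.
  destruct (io_subseq _ (not_eventually_io _ NE)) as [g [Hg Pg]].
  assert (Pg' : forall i, eps <= hnorm (K (u (g i)))) by (intros i; apply Rnot_lt_le, Pg).
  destruct (compact_bounded K Cp) as [MK HMK].
  destruct Cp as [L Cp].
  destruct (Cp (fun i => u (g i))) as [phi [Hphi [l Hl]]].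
  { exists 1. intros; rewrite orthonormal_norm; auto; lra. }
  set (w := fun i => u (g (phi i))).
  assert (Ow : orthonormal w).
  { unfold w. apply (orthonormal_comp u (fun i => g (phi i))); auto.
    intros i. apply (strict_incr_lt g Hg). auto. }
  destruct (hcv_eps _ _ Hl (eps / 2) ltac:(lra)) as [N1 HN1].
  assert (Ll : eps / 2 <= hnorm l).
  { specialize (HN1 N1 (le_n _)). pose proof (hnorm_sub_ge (K (u (g (phi N1)))) l).
    pose proof (Pg' (phi N1)). lra. }
  set (f := fun x => hinner (K x) l).
  assert (Lf : clinear f).
  { destruct L as [La Ls]. split; intros; unfold f. rewrite La, hinner_add_l; auto. rewrite Ls, hinner_scal_l; auto. }
  assert (Bf : forall x, Cmod (f x) <= (MK * hnorm l) * hnorm x).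
  { intros x. unfold f. pose proof (cauchy_schwarz (K x) l). pose proof (HMK x).
    pose proof (hnorm_pos l). pose proof (hnorm_pos x). nra. }
  set (d := hnorm l * hnorm l / 4).
  assert (Dp : 0 < d). { unfold d. nra. }
  destruct (func_null f _ w Lf Bf Ow d Dp) as [N2 HN2].
  assert (Lp : 0 < hnorm l) by lra.
  destruct (hcv_eps _ _ Hl (hnorm l / 4) ltac:(lra)) as [N3 HN3].
  set (k := max N2 N3).
  specialize (HN2 k ltac:(lia)). specialize (HN3 k ltac:(lia)).
  unfold f, w in HN2.
  assert (E : hinner (K (u (g (phi k)))) l = Cadd (hinner l l) (hinner (hsub (K (u (g (phi k)))) l) l)).
  { rewrite hinner_sub_l. cring. }
  rewrite E in HN2.
  pose proof (cauchy_schwarz (hsub (K (u (g (phi k)))) l) l).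
  pose proof (Cmod_add (Cadd (hinner l l) (hinner (hsub (K (u (g (phi k)))) l) l)) (Copp (hinner (hsub (K (u (g (phi k)))) l) l))).
  replace (Cadd (Cadd (hinner l l) (hinner (hsub (K (u (g (phi k)))) l) l)) (Copp (hinner (hsub (K (u (g (phi k)))) l) l))) with (hinner l l) in H1 by cring.
  assert (Cll : Cmod (hinner l l) = hnorm l * hnorm l).
  { rewrite inner_self_eq, Cmod_RtoC, Rabs_right, hnorm_sq; [auto| apply Rle_ge, hinner_pos]. }
  rewrite Cmod_opp, Cll in H1. unfold d in HN2.
  assert (hnorm (hsub (K (u (g (phi k)))) l) * hnorm l <= hnorm l / 4 * hnorm l).
  { apply Rmult_le_compat_r; lra. }
  nra.
Qed.

End HE.

Lemma forward_dir (H : CHilbertSpace) (n : nat) (T K : Fin.t n -> H -> H) lam :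
  (forall j, compact_op (K j)) -> D_const (tuple_add T K) lam -> ess_num_range T lam.
Proof.
  intros Cp [u [[Ou Mu] Hd]]. exists u. split; auto. intros j eps He.
  destruct (compact_null (K j) u (Cp j) Ou eps He) as [N HN]. exists N. intros k Hk.
  specialize (HN k Hk). specialize (Hd k j). unfold tuple_add in Hd. rewrite hinner_add_l in Hd.
  unfold R_dist. rewrite Rminus_0_r, Rabs_right by (apply Rle_ge, Cmod_ge_0).
  replace (Csub (hinner (T j (u k)) (u k)) (lam j)) with (Copp (hinner (K j (u k)) (u k))).
  2: { rewrite <- Hd. cring. }
  rewrite Cmod_opp. pose proof (cauchy_schwarz (K j (u k)) (u k)). rewrite orthonormal_norm in H0 by auto. lra.
Qed.


Definition inf (P : nat -> Prop) : Prop := forall N, exists i, (N <= i)%nat /\ P i.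

Lemma inf_split (P Q1 Q2 : nat -> Prop) : inf P -> (forall i, P i -> Q1 i \/ Q2 i) ->
  inf (fun i => P i /\ Q1 i) \/ inf (fun i => P i /\ Q2 i).
Proof.
  intros IP Hs. destruct (classic (inf (fun i => P i /\ Q1 i))) as [h|h]; [left; auto|right].
  unfold inf in h. apply not_all_ex_not in h. destruct h as [N HN].
  intros M. destruct (IP (max M N)) as [i [Hi Pi]]. exists i. split; [lia|].
  split; auto. destruct (Hs i Pi); auto. exfalso. apply HN. exists i. split; [lia|auto].
Qed.

Lemma bisect (P : nat -> Prop) (f : nat -> R) a w : inf P -> 0 <= w ->
  (forall i, P i -> a <= f i <= a + w) ->
  forall t, exists Q : nat -> Prop, (forall i, Q i -> P i) /\ inf Q /\
    exists a', forall i, Q i -> a' <= f i <= a' + w / 2 ^ t.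
Proof.
  intros IP Hw Hb t. induction t.
  - exists P. split; auto. split; auto. exists a. simpl. intros. replace (w / 1) with w by field. auto.
  - destruct IHt as [Q [QP [IQ [a' Ha']]]].
    set (h := w / 2 ^ S t).
    assert (Hh : w / 2 ^ t = h + h). { unfold h. simpl. field. apply pow_nonzero. lra. }
    destruct (inf_split Q (fun i => f i <= a' + h) (fun i => a' + h <= f i) IQ) as [I1|I2].
    { intros i _. lra. }
    + exists (fun i => Q i /\ f i <= a' + h). split; [intros i [q _]; auto|]. split; auto.
      exists a'. intros i [q Hq]. specialize (Ha' i q). fold h. lra.
    + exists (fun i => Q i /\ a' + h <= f i). split; [intros i [q _]; auto|]. split; auto.
      exists (a' + h). intros i [q Hq]. specialize (Ha' i q). fold h. lra.
Qed.

Lemma Cmod_le_ReIm a : Cmod a <= Rabs (Re a) + Rabs (Im a).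
Proof.
  apply Cmod_le_sq. pose proof (Rabs_pos (Re a)); pose proof (Rabs_pos (Im a)); lra.
  pose proof (Rabs_pos (Re a)); pose proof (Rabs_pos (Im a)).
  assert (Re a * Re a = Rabs (Re a) * Rabs (Re a)) by (rewrite <- Rabs_mult, Rabs_right; nra).
  assert (Im a * Im a = Rabs (Im a) * Rabs (Im a)) by (rewrite <- Rabs_mult, Rabs_right; nra).
  nra.
Qed.

Lemma refine1 (P : nat -> Prop) (g : nat -> complex) B t : inf P -> (forall i, Cmod (g i) <= B) ->
  exists Q : nat -> Prop, (forall i, Q i -> P i) /\ inf Q /\
    forall i i', Q i -> Q i' -> Cmod (Csub (g i) (g i')) <= 4 * B / 2 ^ t.
Proof.
  intros IP Hg.
  assert (B0 : 0 <= B). { pose proof (Hg 0%nat). pose proof (Cmod_ge_0 (g 0%nat)). lra. }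
  destruct (bisect P (fun i => Re (g i)) (-B) (2 * B) IP ltac:(lra)) with (t := t) as [Q1 [Q1P [IQ1 [a1 Ha1]]]].
  { intros i _. pose proof (Re_le_Cmod (g i)). pose proof (Hg i). split; unfold Rabs in *; destruct Rcase_abs; lra. }
  destruct (bisect Q1 (fun i => Im (g i)) (-B) (2 * B) IQ1 ltac:(lra)) with (t := t) as [Q2 [Q2P [IQ2 [a2 Ha2]]]].
  { intros i _. pose proof (Im_le_Cmod (g i)). pose proof (Hg i). split; unfold Rabs in *; destruct Rcase_abs; lra. }
  exists Q2. split; [auto|]. split; auto.
  intros i i' Qi Qi'. eapply Rle_trans; [apply Cmod_le_ReIm|].
  pose proof (Ha1 i (Q2P i Qi)). pose proof (Ha1 i' (Q2P i' Qi')). pose proof (Ha2 i Qi). pose proof (Ha2 i' Qi').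
  simpl.
  assert (E : 4 * B / 2 ^ t = 2 * B / 2 ^ t + 2 * B / 2 ^ t) by (field; apply pow_nonzero; lra).
  rewrite E. apply Rplus_le_compat; unfold Rabs; destruct Rcase_abs; lra.
Qed.

Lemma refine_many (c : nat -> nat -> complex) B (P : nat -> Prop) : inf P -> (forall k i, Cmod (c k i) <= B) ->
  forall s t, exists Q : nat -> Prop, (forall i, Q i -> P i) /\ inf Q /\
    forall k i i', (k < s)%nat -> Q i -> Q i' -> Cmod (Csub (c k i) (c k i')) <= 4 * B / 2 ^ t.
Proof.
  intros IP Hc s t. induction s.
  - exists P. split; auto. split; auto. intros; lia.
  - destruct IHs as [Q [QP [IQ HQ]]].
    destruct (refine1 Q (c s) B t IQ (Hc s)) as [Q' [Q'Q [IQ' HQ']]].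
    exists Q'. split; auto. split; auto.
    intros k i i' Hk Qi Qi'. destruct (Nat.eq_dec k s). subst; auto.
    apply HQ; auto. lia.
Qed.

Lemma pow2_ge_INR t : INR t <= 2 ^ t.
Proof. induction t. simpl; lra. rewrite S_INR. simpl. assert (1 <= 2 ^ t) by (apply pow_R1_Rle; lra). lra. Qed.

Lemma diag_extract (c : nat -> nat -> complex) B : (forall k i, Cmod (c k i) <= B) ->
  exists phi : nat -> nat, (forall i, (phi i < phi (S i))%nat) /\
    forall k eta, eta > 0 -> exists N, forall i i', (N <= i)%nat -> (N <= i')%nat ->
      Cmod (Csub (c k (phi i)) (c k (phi i'))) <= eta.
Proof.
  intros Hc.
  assert (step : forall (P : {P : nat -> Prop | inf P}) (s : nat),
             {Q : nat -> Prop | (forall i, Q i -> proj1_sig P i) /\ inf Q /\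
                forall k i i', (k < s)%nat -> Q i -> Q i' -> Cmod (Csub (c k i) (c k i')) <= 4 * B / 2 ^ s}).
  { intros [P IP] s. apply constructive_indefinite_description. apply (refine_many c B P IP Hc s s). }
  assert (inf_true : inf (fun _ => True)). { intros N; exists N; auto. }
  set (Ps := fix Ps (s : nat) : {P : nat -> Prop | inf P} :=
         match s with
         | O => exist _ (fun _ => True) inf_true
         | S s' => let q := step (Ps s') (S s') in exist _ (proj1_sig q) (proj1 (proj2 (proj2_sig q)))
         end).
  assert (Hnest : forall s i, proj1_sig (Ps (S s)) i -> proj1_sig (Ps s) i).
  { intros s i. simpl. destruct (step (Ps s) (S s)) as [Q [QP [IQ HQ]]]. simpl. apply QP. }
  assert (Hprop : forall s k i i', (k < S s)%nat -> proj1_sig (Ps (S s)) i -> proj1_sig (Ps (S s)) i' ->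
            Cmod (Csub (c k i) (c k i')) <= 4 * B / 2 ^ (S s)).
  { intros s. simpl. destruct (step (Ps s) (S s)) as [Q [QP [IQ HQ]]]. simpl. apply HQ. }
  assert (Hnest' : forall s s' i, (s <= s')%nat -> proj1_sig (Ps s') i -> proj1_sig (Ps s) i).
  { intros s s' i Hs. induction Hs; auto. }
  assert (pick : forall s N, {i | (N <= i)%nat /\ proj1_sig (Ps s) i}).
  { intros s N. apply constructive_indefinite_description. apply (proj2_sig (Ps s)). }
  set (phi := fix phi (i : nat) : nat :=
         match i with O => proj1_sig (pick O O) | S j => proj1_sig (pick (S j) (S (phi j))) end).
  assert (Hphi_in : forall i, proj1_sig (Ps i) (phi i)).
  { intros [|i]; simpl. destruct (pick 0%nat 0%nat) as [x [Hx1 Hx]]; simpl; auto. destruct (pick (S i) (S (phi i))) as [x [Hx1 Hx]]; simpl; auto. }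
  exists phi. split.
  - intros i. simpl. destruct (pick (S i) (S (phi i))) as [x [Hx Hx2]]. simpl. lia.
  - intros k eta Heta.
    assert (B0 : 0 <= B). { pose proof (Hc 0%nat 0%nat). pose proof (Cmod_ge_0 (c 0%nat 0%nat)). lra. }
    destruct (exists_nat_gt (4 * B / eta)) as [N0 HN0].
    set (N := S (max N0 k)).
    exists N. intros i i' Hi Hi'.
    assert (P1 : proj1_sig (Ps N) (phi i)) by (apply (Hnest' N i); auto).
    assert (P2 : proj1_sig (Ps N) (phi i')) by (apply (Hnest' N i'); auto).
    eapply Rle_trans. apply (Hprop (max N0 k)); auto. lia.
    pose proof (pow2_ge_INR (S (max N0 k))). pose proof (le_INR N0 (S (max N0 k)) ltac:(lia)).
    assert (Hp : 0 < 2 ^ S (max N0 k)) by (apply pow_lt; lra).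
    apply (Rmult_le_reg_r (2 ^ S (max N0 k))); auto. unfold Rdiv. rewrite Rmult_assoc, Rinv_l by lra.
    assert (4 * B / eta * eta = 4 * B) by (field; lra).
    nra.
Qed.


Section HG.
Context {H : CHilbertSpace}.

Lemma hsub_add_r (x y : H) : hadd (hsub x y) y = x.
Proof. unfold hsub. rewrite <- hadd_assoc, (hadd_comm _ (hopp y)), hadd_opp, hadd_0. auto. Qed.

Lemma hsub_eq0 (x y : H) : hsub x y = hzero -> x = y.
Proof. intros E. rewrite <- (hsub_add_r x y), E, hadd_0_l. auto. Qed.

Lemma hext (x y : H) : (forall z, hinner x z = hinner y z) -> x = y.
Proof.
  intros E. assert (Z : hinner (hsub x y) (hsub x y) = C0).
  { rewrite hinner_sub_l, E. apply Csub_diag. }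
  apply hinner_def in Z. apply hsub_eq0; auto.
Qed.

Ltac hvec := apply hext; intro; repeat (rewrite ?hinner_add_l, ?hinner_sub_l, ?hinner_scal_l, ?hinner_opp_l, ?hinner_0_l); cring.

Lemma hcv_unique (a : nat -> H) l1 l2 : hcv a l1 -> hcv a l2 -> l1 = l2.
Proof.
  intros C1 C2. apply hsub_eq0, hnorm_zero.
  apply Rle_antisym; [|apply hnorm_pos].
  apply Rnot_lt_le. intros Hp.
  destruct (hcv_eps a l1 C1 (hnorm (hsub l1 l2) / 2) ltac:(lra)) as [N1 HN1].
  destruct (hcv_eps a l2 C2 (hnorm (hsub l1 l2) / 2) ltac:(lra)) as [N2 HN2].
  specialize (HN1 (max N1 N2) ltac:(lia)). specialize (HN2 (max N1 N2) ltac:(lia)).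
  pose proof (hnorm_sub_tri l1 (a (max N1 N2)) l2). rewrite (hsub_sym_norm l1 (a (max N1 N2))) in H0. lra.
Qed.

Lemma hcv_add (a b : nat -> H) la lb : hcv a la -> hcv b lb -> hcv (fun k => hadd (a k) (b k)) (hadd la lb).
Proof.
  intros Ca Cb. apply eps_hcv. intros e He.
  destruct (hcv_eps a la Ca (e/2) ltac:(lra)) as [N1 HN1].
  destruct (hcv_eps b lb Cb (e/2) ltac:(lra)) as [N2 HN2].
  exists (max N1 N2). intros k Hk.
  replace (hsub (hadd (a k) (b k)) (hadd la lb)) with (hadd (hsub (a k) la) (hsub (b k) lb)) by hvec.
  pose proof (hnorm_add (hsub (a k) la) (hsub (b k) lb)). specialize (HN1 k ltac:(lia)). specialize (HN2 k ltac:(lia)). lra.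
Qed.

Lemma hcv_scal (a : nat -> H) la c : hcv a la -> hcv (fun k => hscal c (a k)) (hscal c la).
Proof.
  intros Ca. apply eps_hcv. intros e He.
  destruct (hcv_eps a la Ca (e/(Cmod c + 1))) as [N1 HN1].
  { apply Rdiv_lt_0_compat; auto. pose proof (Cmod_ge_0 c); lra. }
  exists N1. intros k Hk.
  replace (hsub (hscal c (a k)) (hscal c la)) with (hscal c (hsub (a k) la)) by hvec.
  rewrite hnorm_scal. specialize (HN1 k Hk). pose proof (Cmod_ge_0 c).
  pose proof (hnorm_pos (hsub (a k) la)).
  apply Rle_lt_trans with ((Cmod c + 1) * hnorm (hsub (a k) la)). nra.
  apply Rlt_le_trans with ((Cmod c + 1) * (e / (Cmod c + 1))). apply Rmult_lt_compat_l; lra.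
  right. field. lra.
Qed.

Lemma hcv_ev_const (a : nat -> H) l N : (forall k, (N <= k)%nat -> a k = l) -> hcv a l.
Proof.
  intros E. apply eps_hcv. intros e He. exists N. intros k Hk. rewrite E, hsub_diag, hnorm_0; auto.
Qed.

Lemma lincomb_zero (v : nat -> H) m : lincomb (fun _ => C0) v m = hzero.
Proof. induction m; simpl; auto. rewrite IHm, hscal_0, hadd_0. auto. Qed.

Lemma lincomb_add c d (v : nat -> H) m :
  lincomb (fun i => Cadd (c i) (d i)) v m = hadd (lincomb c v m) (lincomb d v m).
Proof. induction m; simpl. rewrite hadd_0; auto. rewrite IHm. hvec. Qed.

Lemma lincomb_scal a c (v : nat -> H) m :
  lincomb (fun i => Cmul a (c i)) v m = hscal a (lincomb c v m).
Proof. induction m; simpl. rewrite hscal_zero; auto. rewrite IHm. hvec. Qed.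

Lemma lincomb_sub c d (v : nat -> H) m :
  hsub (lincomb c v m) (lincomb d v m) = lincomb (fun i => Csub (c i) (d i)) v m.
Proof. induction m; simpl. apply hsub_diag. rewrite <- IHm. hvec. Qed.

Lemma lincomb_delta a (v : nat -> H) m k : (k < m)%nat ->
  lincomb (fun j => if Nat.eqb j k then a else C0) v m = hscal a (v k).
Proof.
  induction m; intros Hk; [lia|]. simpl. destruct (Nat.eqb m k) eqn:E.
  - apply Nat.eqb_eq in E. subst. rewrite (lincomb_ext _ (fun _ => C0) _ v), lincomb_zero, hadd_0_l; auto.
    intros i Hi. split; auto. destruct (Nat.eqb i k) eqn:E2; auto. apply Nat.eqb_eq in E2; lia.
  - apply Nat.eqb_neq in E. rewrite IHm by lia. rewrite hscal_0, hadd_0. auto.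
Qed.

Lemma orth_forth (u : nat -> H) m : orthonormal u -> forth u m.
Proof. intros O i j _ _. apply O. Qed.

Lemma ev_fin_mono (M : nat) (R : nat -> nat -> Prop) :
  (forall k N N', (N <= N')%nat -> R k N -> R k N') ->
  (forall k, (k < M)%nat -> exists N, R k N) -> exists N, forall k, (k < M)%nat -> R k N.
Proof.
  intros Mono Ex. induction M.
  - exists 0%nat. intros; lia.
  - destruct IHM as [N1 HN1]. intros; apply Ex; lia.
    destruct (Ex M ltac:(lia)) as [N2 HN2].
    exists (max N1 N2). intros k Hk. destruct (Nat.eq_dec k M).
    + subst. apply (Mono M N2); auto. lia.
    + apply (Mono k N1); [lia|]. apply HN1. lia.
Qed.

Lemma le_eps_le a b : (forall e, e > 0 -> a < e + b) -> a <= b.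
Proof. intros E. apply Rnot_lt_le. intros h. specialize (E ((a - b)/2) ltac:(lra)). lra. Qed.

Section Diag.
Variable u : nat -> H.
Variable eps : nat -> complex.
Hypothesis Ou : orthonormal u.
Hypothesis Eps : forall d, d > 0 -> exists N, forall k, (N <= k)%nat -> Cmod (eps k) <= d.

Definition Sop m (x : H) : H := lincomb (fun k => Cmul (eps k) (hinner x (u k))) u m.

Lemma Sdiff m p x : (m <= p)%nat ->
  hsub (Sop p x) (Sop m x) = lincomb (fun k => if Nat.ltb k m then C0 else Cmul (eps k) (hinner x (u k))) u p.
Proof.
  intros Hmp. induction Hmp.
  - rewrite hsub_diag, (lincomb_ext _ (fun _ => C0) _ u), lincomb_zero; auto.
    intros i Hi. split; auto. destruct (Nat.ltb i m) eqn:E; auto. apply Nat.ltb_ge in E. lia.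
  - unfold Sop in *. simpl. rewrite <- IHHmp. destruct (Nat.ltb m0 m) eqn:E. apply Nat.ltb_lt in E. lia.
    hvec.
Qed.

Lemma Sdiff_bound m p x d : 0 <= d -> (forall k, (m <= k)%nat -> Cmod (eps k) <= d) -> (m <= p)%nat ->
  hnorm (hsub (Sop p x) (Sop m x)) <= d * hnorm x.
Proof.
  intros D0 Hd Hmp. rewrite Sdiff by auto. apply hnorm_le_sq.
  apply Rmult_le_pos; auto; apply hnorm_pos.
  rewrite lincomb_orth_nsq by (apply orth_forth; auto).
  eapply Rle_trans with (Rsum (fun k => d * d * (Cmod (hinner x (u k)) * Cmod (hinner x (u k)))) p).
  - apply Rsum_le. intros i Hi. destruct (Nat.ltb i m) eqn:E.
    + rewrite Cmod_0. pose proof (Cmod_ge_0 (hinner x (u i))). nra.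
    + apply Nat.ltb_ge in E. rewrite Cmod_mul. specialize (Hd i E). pose proof (Cmod_ge_0 (eps i)).
      pose proof (Cmod_ge_0 (hinner x (u i))).
      replace (Cmod (eps i) * Cmod (hinner x (u i)) * (Cmod (eps i) * Cmod (hinner x (u i)))) with
        ((Cmod (eps i) * Cmod (eps i)) * (Cmod (hinner x (u i)) * Cmod (hinner x (u i)))) by ring.
      apply Rmult_le_compat_r. nra. nra.
  - rewrite Rsum_scal. replace (d * hnorm x * (d * hnorm x)) with (d * d * (hnorm x * hnorm x)) by ring.
    rewrite hnorm_sq. apply Rmult_le_compat_l. nra. apply bessel. apply orth_forth; auto.
Qed.

Lemma Sop_limit x : exists l, hcv (fun m => Sop m x) l.
Proof.
  apply (hcomplete H (fun m => Sop m x)). intros e He.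
  set (d := e / (4 * (hnorm x + 1))).
  assert (Dp : d > 0). { unfold d. pose proof (hnorm_pos x). apply Rdiv_lt_0_compat; lra. }
  destruct (Eps d Dp) as [N HN]. exists N. intros m p Hm Hp.
  change (hnorm (hsub (Sop m x) (Sop p x)) < e).
  pose proof (hnorm_sub_tri (Sop m x) (Sop N x) (Sop p x)).
  pose proof (Sdiff_bound N m x d ltac:(lra) HN Hm). pose proof (Sdiff_bound N p x d ltac:(lra) HN Hp).
  rewrite (hsub_sym_norm (Sop N x)) in H0.
  assert (d * hnorm x < e / 2).
  { assert (d * (hnorm x + 1) = e / 4) by (unfold d; pose proof (hnorm_pos x); field; lra). lra. }
  lra.
Qed.

Definition Kdiag (x : H) : H := proj1_sig (constructive_indefinite_description _ (Sop_limit x)).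

Lemma Kdiag_cv x : hcv (fun m => Sop m x) (Kdiag x).
Proof. unfold Kdiag. destruct constructive_indefinite_description; auto. Qed.

Lemma Kdiag_linear : linear_op Kdiag.
Proof.
  split.
  - intros x y. apply (hcv_unique (fun m => Sop m (hadd x y))). apply Kdiag_cv.
    replace (fun m => Sop m (hadd x y)) with (fun m => hadd (Sop m x) (Sop m y)).
    apply hcv_add; apply Kdiag_cv.
    apply functional_extensionality. intros m. unfold Sop. rewrite <- lincomb_add.
    apply lincomb_ext. intros; split; auto. rewrite hinner_add_l. cring.
  - intros a x. apply (hcv_unique (fun m => Sop m (hscal a x))). apply Kdiag_cv.
    replace (fun m => Sop m (hscal a x)) with (fun m => hscal a (Sop m x)).
    apply hcv_scal; apply Kdiag_cv.
    apply functional_extensionality. intros m. unfold Sop. rewrite <- lincomb_scal.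
    apply lincomb_ext. intros; split; auto. rewrite hinner_scal_l. cring.
Qed.

Lemma Kdiag_basis k : Kdiag (u k) = hscal (eps k) (u k).
Proof.
  apply (hcv_unique (fun m => Sop m (u k))). apply Kdiag_cv.
  apply (hcv_ev_const _ _ (S k)). intros m Hm. unfold Sop.
  rewrite <- (lincomb_delta (eps k) u m k) by lia. apply lincomb_ext. intros i Hi. split; auto.
  rewrite Ou. destruct (Nat.eqb k i) eqn:E1, (Nat.eqb i k) eqn:E2.
  - apply Nat.eqb_eq in E1; subst. cring.
  - apply Nat.eqb_eq in E1; apply Nat.eqb_neq in E2; lia.
  - apply Nat.eqb_neq in E1; apply Nat.eqb_eq in E2; lia.
  - cring.
Qed.

Lemma Kdiag_approx m x d : 0 <= d -> (forall k, (m <= k)%nat -> Cmod (eps k) <= d) ->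
  hnorm (hsub (Kdiag x) (Sop m x)) <= d * hnorm x.
Proof.
  intros D0 Hd. apply le_eps_le. intros e He.
  destruct (hcv_eps _ _ (Kdiag_cv x) e He) as [N HN].
  specialize (HN (max N m) ltac:(lia)).
  pose proof (hnorm_sub_tri (Kdiag x) (Sop (max N m) x) (Sop m x)).
  pose proof (Sdiff_bound m (max N m) x d D0 Hd ltac:(lia)).
  rewrite hsub_sym_norm in HN. lra.
Qed.

Lemma Kdiag_compact : compact_op Kdiag.
Proof.
  split. apply Kdiag_linear.
  intros v [B HB].
  assert (B0 : 0 <= B) by (pose proof (HB 0%nat); pose proof (hnorm_pos (v 0%nat)); lra).
  destruct (diag_extract (fun k i => hinner (v i) (u k)) B) as [phi [Hphi Hc]].
  { intros k i. pose proof (cauchy_schwarz (v i) (u k)). rewrite (orthonormal_norm u k Ou) in H0.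
    specialize (HB i). lra. }
  exists phi. split; auto.
  apply (hcomplete H (fun i => Kdiag (v (phi i)))). intros e He.
  change (exists N, forall m p, (m >= N)%nat -> (p >= N)%nat -> hnorm (hsub (Kdiag (v (phi m))) (Kdiag (v (phi p)))) < e).
  set (d := e / (3 * (B + 1))).
  assert (Dp : d > 0) by (unfold d; apply Rdiv_lt_0_compat; lra).
  destruct (Eps d Dp) as [M HM].
  set (A := Rsum (fun k => Cmod (eps k) * Cmod (eps k)) M).
  assert (A0 : 0 <= A) by (apply Rsum_nonneg; intros; nra).
  set (eta := e / (6 * (A + 1))).
  assert (Ep : eta > 0) by (unfold eta; apply Rdiv_lt_0_compat; lra).
  destruct (ev_fin_mono M (fun k N => forall i i', (N <= i)%nat -> (N <= i')%nat ->
       Cmod (Csub (hinner (v (phi i)) (u k)) (hinner (v (phi i')) (u k))) <= eta)) as [N HN].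
  { intros k N N' HNN' R i i' Hi Hi'. apply R; lia. }
  { intros k _. apply (Hc k eta Ep). }
  exists N. intros a b Ha Hb.
  pose proof (Kdiag_approx M (v (phi a)) d ltac:(lra) HM) as Ea.
  pose proof (Kdiag_approx M (v (phi b)) d ltac:(lra) HM) as Eb.
  rewrite hsub_sym_norm in Eb.
  assert (Mid : hnorm (hsub (Sop M (v (phi a))) (Sop M (v (phi b)))) <= e / 6).
  { unfold Sop. rewrite lincomb_sub. apply hnorm_le_sq. lra.
    rewrite lincomb_orth_nsq by (apply orth_forth; auto).
    apply Rle_trans with (Rsum (fun k => Cmod (eps k) * Cmod (eps k) * (eta * eta)) M).
    - apply Rsum_le. intros k Hk.
      replace (Csub (Cmul (eps k) (hinner (v (phi a)) (u k))) (Cmul (eps k) (hinner (v (phi b)) (u k))))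
        with (Cmul (eps k) (Csub (hinner (v (phi a)) (u k)) (hinner (v (phi b)) (u k)))) by cring.
      rewrite Cmod_mul. specialize (HN k Hk a b ltac:(lia) ltac:(lia)).
      pose proof (Cmod_ge_0 (eps k)).
      pose proof (Cmod_ge_0 (Csub (hinner (v (phi a)) (u k)) (hinner (v (phi b)) (u k)))).
      replace (Cmod (eps k) * Cmod (Csub (hinner (v (phi a)) (u k)) (hinner (v (phi b)) (u k))) *
               (Cmod (eps k) * Cmod (Csub (hinner (v (phi a)) (u k)) (hinner (v (phi b)) (u k)))))
        with ((Cmod (eps k) * Cmod (eps k)) * (Cmod (Csub (hinner (v (phi a)) (u k)) (hinner (v (phi b)) (u k))) *
                Cmod (Csub (hinner (v (phi a)) (u k)) (hinner (v (phi b)) (u k))))) by ring.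
      apply Rmult_le_compat_l. nra. apply Rmult_le_compat; auto.
    - rewrite (Rsum_ext _ (fun k => (eta * eta) * (Cmod (eps k) * Cmod (eps k)))) by (intros; ring).
      rewrite Rsum_scal. fold A. unfold eta.
      replace (e / (6 * (A + 1)) * (e / (6 * (A + 1))) * A) with ((e / 6) * (e / 6) * (A / ((A + 1) * (A + 1)))) by (field; lra).
      assert (A / ((A + 1) * (A + 1)) <= 1).
      { apply (Rmult_le_reg_r ((A + 1) * (A + 1))). nra. field_simplify; nra. }
      assert (0 <= A / ((A + 1) * (A + 1))) by (apply Rmult_le_pos; auto; apply Rlt_le, Rinv_0_lt_compat; nra).
      nra. }
  pose proof (hnorm_sub_tri (Kdiag (v (phi a))) (Sop M (v (phi a))) (Kdiag (v (phi b)))).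
  pose proof (hnorm_sub_tri (Sop M (v (phi a))) (Sop M (v (phi b))) (Kdiag (v (phi b)))).
  assert (d * hnorm (v (phi a)) <= e / 3).
  { specialize (HB (phi a)). pose proof (hnorm_pos (v (phi a))).
    assert (d * (B + 1) = e / 3) by (unfold d; field; lra). nra. }
  assert (d * hnorm (v (phi b)) <= e / 3).
  { specialize (HB (phi b)). pose proof (hnorm_pos (v (phi b))).
    assert (d * (B + 1) = e / 3) by (unfold d; field; lra). nra. }
  lra.
Qed.

End Diag.

Lemma diag_op (u : nat -> H) (eps : nat -> complex) : orthonormal u ->
  (forall d, d > 0 -> exists N, forall k, (N <= k)%nat -> Cmod (eps k) <= d) ->
  exists K, compact_op K /\ forall k, K (u k) = hscal (eps k) (u k).
Proof.
  intros Ou Eps. exists (Kdiag u eps Ou Eps). split.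
  apply Kdiag_compact; auto. apply Kdiag_basis; auto.
Qed.

End HG.


Fixpoint had (p q a : nat) : R :=
  match p with
  | O => 1
  | S p' => had p' (q mod 2 ^ p') (a mod 2 ^ p') *
            (if andb (Nat.leb (2 ^ p') q) (Nat.leb (2 ^ p') a) then -1 else 1)
  end.

Lemma had_sq p q a : had p q a * had p q a = 1.
Proof.
  revert q a. induction p; intros; simpl. ring.
  specialize (IHp (q mod 2^p) (a mod 2^p)). set (h := had p (q mod 2^p) (a mod 2^p)) in *.
  destruct (andb _ _); (transitivity (h * h); [ring | exact IHp]).
Qed.

Lemma had_sym p q a : had p q a = had p a q.
Proof.
  revert q a. induction p; intros; simpl; auto. rewrite IHp. rewrite Bool.andb_comm. auto.
Qed.

Lemma pow2_pos p : (0 < 2 ^ p)%nat.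
Proof. induction p; simpl; lia. Qed.

Lemma had_orth p q r : (q < 2 ^ p)%nat -> (r < 2 ^ p)%nat ->
  Rsum (fun a => had p q a * had p r a) (2 ^ p) = if Nat.eqb q r then INR (2 ^ p) else 0.
Proof.
  revert q r. induction p; intros q r Hq Hr.
  - simpl in *. assert (q = 0%nat) by lia. assert (r = 0%nat) by lia. subst. simpl. ring.
  - set (m := (2 ^ p)%nat) in *. assert (Hm : (2 ^ S p = m + m)%nat) by (simpl; unfold m; lia).
    rewrite Hm. rewrite Rsum_split.
    assert (m0 : (0 < m)%nat) by apply pow2_pos.
    rewrite (Rsum_ext _ (fun a => had p (q mod m) a * had p (r mod m) a)).
    2: { intros a Ha. simpl. fold m. rewrite (Nat.mod_small a m) by auto.
         replace (Nat.leb m a) with false by (symmetry; apply Nat.leb_gt; auto).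
         rewrite !Bool.andb_false_r. ring. }
    rewrite (Rsum_ext (fun i => had (S p) q (m + i) * had (S p) r (m + i))
               (fun a => (had p (q mod m) a * had p (r mod m) a) *
                         ((if Nat.leb m q then -1 else 1) * (if Nat.leb m r then -1 else 1)))).
    2: { intros a Ha. simpl. fold m.
         replace ((m + a) mod m)%nat with a.
         2: { rewrite Nat.add_comm, Nat.Div0.add_mod, Nat.Div0.mod_same, Nat.add_0_r, Nat.Div0.mod_mod. rewrite Nat.mod_small; auto. }
         replace (Nat.leb m (m + a)) with true by (symmetry; apply Nat.leb_le; lia).
         rewrite !Bool.andb_true_r. ring. }
    rewrite (Rsum_ext (fun a => _ * _ * _) (fun a => ((if Nat.leb m q then -1 else 1) * (if Nat.leb m r then -1 else 1)) * (had p (q mod m) a * had p (r mod m) a))) by (intros; ring).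
    rewrite Rsum_scal.
    rewrite IHp by (apply Nat.mod_upper_bound; lia).
    assert (Hq' : (q = (if Nat.leb m q then m else 0) + q mod m)%nat).
    { destruct (Nat.leb m q) eqn:E.
      - apply Nat.leb_le in E. rewrite (Nat.Div0.mod_eq q m). assert (q / m = 1)%nat.
        { symmetry; apply Nat.div_unique with (q - m)%nat; lia. } rewrite H. lia.
      - apply Nat.leb_gt in E. rewrite Nat.mod_small; lia. }
    assert (Hr' : (r = (if Nat.leb m r then m else 0) + r mod m)%nat).
    { destruct (Nat.leb m r) eqn:E.
      - apply Nat.leb_le in E. rewrite (Nat.Div0.mod_eq r m). assert (r / m = 1)%nat.
        { symmetry; apply Nat.div_unique with (r - m)%nat; lia. } rewrite H. lia.
      - apply Nat.leb_gt in E. rewrite Nat.mod_small; lia. }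
    pose proof (Nat.mod_upper_bound q m ltac:(lia)). pose proof (Nat.mod_upper_bound r m ltac:(lia)).
    rewrite plus_INR.
    destruct (Nat.leb m q) eqn:Eq, (Nat.leb m r) eqn:Er; rewrite ?Eq in Hq'; rewrite ?Er in Hr';
    destruct (Nat.eqb_spec (q mod m) (r mod m)); destruct (Nat.eqb_spec q r); try ring; lia.
Qed.


Lemma RtoC_mul a b : Cmul (RtoC a) (RtoC b) = RtoC (a * b). Proof. cring. Qed.
Lemma RtoC_conj a : Cconj (RtoC a) = RtoC a. Proof. cring. Qed.
Lemma Csum_RtoC f n : Csum (fun i => RtoC (f i)) n = RtoC (Rsum f n).
Proof. induction n; simpl. cring. rewrite IHn. cring. Qed.

Lemma Csum_sub f g n : Csub (Csum f n) (Csum g n) = Csum (fun i => Csub (f i) (g i)) n.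
Proof. induction n; simpl. cring. rewrite <- IHn. cring. Qed.

Definition hc p q a : complex := RtoC (had p q a / sqrt (INR (2 ^ p))).

Lemma sn_pos p : 0 < sqrt (INR (2 ^ p)).
Proof. apply sqrt_lt_R0. apply lt_0_INR. apply pow2_pos. Qed.
Lemma sn_sq p : sqrt (INR (2 ^ p)) * sqrt (INR (2 ^ p)) = INR (2 ^ p).
Proof. apply sqrt_sqrt. apply pos_INR. Qed.

Lemma hc_prod p q a r b : Cmul (hc p q a) (Cconj (hc p r b)) = RtoC (had p q a * had p r b / INR (2 ^ p)).
Proof.
  unfold hc. rewrite RtoC_conj, RtoC_mul. f_equal. pose proof (sn_pos p). pose proof (sn_sq p) as Hs.
  set (s := sqrt (INR (2 ^ p))) in *. rewrite <- Hs. field. lra.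
Qed.

Lemma Cmod_hc p q a : Cmod (hc p q a) = / sqrt (INR (2 ^ p)).
Proof.
  unfold hc. rewrite Cmod_RtoC. pose proof (sn_pos p). pose proof (had_sq p q a).
  unfold Rdiv. rewrite Rabs_mult, Rabs_inv, (Rabs_right (sqrt _)) by lra.
  assert (Rabs (had p q a) = 1).
  { unfold Rabs; destruct Rcase_abs; nra. }
  rewrite H1. ring.
Qed.

Section Mix.
Context {H : CHilbertSpace}.

Definition mixv p (Z : nat -> H) q : H := lincomb (hc p q) Z (2 ^ p).

Lemma mix_forth p Z : forth Z (2 ^ p) -> forth (mixv p Z) (2 ^ p).
Proof.
  intros O q r Hq Hr. unfold mixv. rewrite lincomb_orth_inner by auto.
  rewrite (Csum_ext _ (fun a => RtoC (had p q a * had p r a / INR (2 ^ p)))) by (intros; apply hc_prod).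
  rewrite Csum_RtoC. unfold Rdiv. rewrite (Rsum_ext _ (fun a => / INR (2 ^ p) * (had p q a * had p r a))) by (intros; ring).
  rewrite Rsum_scal, had_orth by auto.
  assert (INR (2 ^ p) <> 0) by (apply not_0_INR; pose proof (pow2_pos p); lia).
  destruct (Nat.eqb q r); apply Ceq; simpl; try field; auto; ring.
Qed.

Lemma mix_span p Z y : (forall q, (q < 2 ^ p)%nat -> hinner y (mixv p Z q) = C0) ->
  forall a, (a < 2 ^ p)%nat -> hinner y (Z a) = C0.
Proof.
  intros Hy a Ha.
  assert (E : Csum (fun q => Cmul (hc p q a) (hinner y (mixv p Z q))) (2 ^ p) = hinner y (Z a)).
  { unfold mixv. rewrite (Csum_ext _ (fun q => Csum (fun b => Cmul (RtoC (had p q a * had p q b / INR (2^p))) (hinner y (Z b))) (2^p))).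
    2: { intros q Hq. rewrite inner_lincomb_r. rewrite <- Csum_scal. apply Csum_ext. intros b Hb.
         rewrite Cmul_assoc. f_equal. rewrite <- hc_prod. auto. }
    rewrite Csum_swap.
    rewrite (Csum_ext _ (fun b => if Nat.eqb b a then hinner y (Z b) else C0)).
    apply Csum_delta; auto.
    intros b Hb. rewrite (Csum_ext _ (fun q => Cmul (RtoC (had p a q * had p b q / INR (2^p))) (hinner y (Z b)))).
    2: { intros q Hq. rewrite (had_sym p q a), (had_sym p q b). auto. }
    rewrite (Csum_ext _ (fun q => Cmul (hinner y (Z b)) (RtoC (/ INR (2^p) * (had p a q * had p b q))))).
    2: { intros. rewrite Cmul_comm. f_equal. f_equal. unfold Rdiv. ring. }
    rewrite Csum_scal, Csum_RtoC, Rsum_scal, had_orth by auto.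
    assert (INR (2 ^ p) <> 0) by (apply not_0_INR; pose proof (pow2_pos p); lia).
    destruct (Nat.eqb_spec a b); destruct (Nat.eqb_spec b a); try lia.
    - apply Ceq; simpl; field_simplify; auto; ring.
    - cring. }
  rewrite <- E. rewrite (Csum_ext _ (fun _ => C0)). apply Csum_zero.
  intros q Hq. rewrite Hy by auto. apply Cmul_0_r.
Qed.

Lemma mix_orth_old p Z v : (forall a, (a < 2 ^ p)%nat -> hinner (Z a) v = C0) ->
  forall q, hinner (mixv p Z q) v = C0.
Proof.
  intros Hz q. unfold mixv. rewrite inner_lincomb_l. rewrite (Csum_ext _ (fun _ => C0)). apply Csum_zero.
  intros; rewrite Hz by auto. apply Cmul_0_r.
Qed.

Lemma mix_diag p Z (T : H -> H) lam q : forth Z (2 ^ p) -> linear_op T -> (q < 2 ^ p)%nat ->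
  Cmod (Csub (hinner (T (mixv p Z q)) (mixv p Z q)) lam) <=
  Rsum (fun a => Rsum (fun b => / INR (2 ^ p) *
     Cmod (Csub (hinner (T (Z a)) (Z b)) (if Nat.eqb a b then lam else C0))) (2 ^ p)) (2 ^ p).
Proof.
  intros O L Hq. set (n := (2 ^ p)%nat).
  assert (Nz : INR n <> 0) by (apply not_0_INR; pose proof (pow2_pos p); unfold n; lia).
  assert (E1 : hinner (T (mixv p Z q)) (mixv p Z q) =
    Csum (fun a => Csum (fun b => Cmul (Cmul (hc p q a) (Cconj (hc p q b))) (hinner (T (Z a)) (Z b))) n) n).
  { unfold mixv. rewrite lincomb_linear by auto. rewrite inner_lincomb_l. apply Csum_ext. intros a Ha.
    rewrite inner_lincomb_r, <- Csum_scal. apply Csum_ext. intros b Hb. cring. }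
  assert (E2 : lam = Csum (fun a => Csum (fun b => Cmul (Cmul (hc p q a) (Cconj (hc p q b))) (if Nat.eqb a b then lam else C0)) n) n).
  { rewrite (Csum_ext _ (fun a => Cmul lam (RtoC (/ INR n)))).
    - rewrite Csum_scal, Csum_RtoC, Rsum_const.
      replace (INR n * / INR n) with 1 by (field; auto). cring.
    - intros a Ha. rewrite (Csum_ext _ (fun b => if Nat.eqb b a then Cmul (Cmul (hc p q a) (Cconj (hc p q b))) lam else C0)).
      + rewrite (Csum_delta (fun b => Cmul (Cmul (hc p q a) (Cconj (hc p q b))) lam)) by auto.
        rewrite hc_prod, had_sq, Cmul_comm. unfold n. f_equal. f_equal. unfold Rdiv. ring.
      + intros b Hb. destruct (Nat.eqb_spec a b); destruct (Nat.eqb_spec b a); try lia. subst; auto. cring. }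
  rewrite E1. rewrite E2 at 1.
  rewrite Csum_sub.
  rewrite (Csum_ext _ (fun a => Csum (fun b => Cmul (Cmul (hc p q a) (Cconj (hc p q b)))
       (Csub (hinner (T (Z a)) (Z b)) (if Nat.eqb a b then lam else C0))) n)).
  2: { intros a Ha. rewrite Csum_sub. apply Csum_ext. intros; cring. }
  eapply Rle_trans. apply Cmod_Csum. apply Rsum_le. intros a Ha.
  eapply Rle_trans. apply Cmod_Csum. apply Rsum_le. intros b Hb.
  rewrite !Cmod_mul, Cmod_conj, !Cmod_hc. right.
  pose proof (sn_pos p). pose proof (sn_sq p) as Hs.
  set (s := sqrt (INR (2 ^ p))) in *. fold n in Hs. rewrite <- Hs. field. lra.
Qed.

End Mix.


Lemma fin_ev (n : nat) (P : Fin.t n -> nat -> Prop) :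
  (forall j, exists N, forall k, (N <= k)%nat -> P j k) -> exists N, forall k, (N <= k)%nat -> forall j, P j k.
Proof.
  induction n; intros Hj.
  - exists 0%nat. intros k _ j. apply Fin.case0. exact j.
  - destruct (IHn (fun j k => P (Fin.FS j) k)) as [N1 HN1]. intros j; apply Hj.
    destruct (Hj Fin.F1) as [N2 HN2].
    exists (max N1 N2). intros k Hk j. apply (Fin.caseS' j (fun j => P j k)).
    + apply HN2. lia.
    + intros j0. apply HN1. lia.
Qed.

Lemma fin_bound (n : nat) (P : Fin.t n -> R -> Prop) :
  (forall j c c', c <= c' -> P j c -> P j c') ->
  (forall j, exists c, P j c) -> exists c, forall j, P j c.
Proof.
  induction n; intros Mono Hj.
  - exists 0. intros j. apply Fin.case0. exact j.
  - destruct (IHn (fun j c => P (Fin.FS j) c)) as [c1 H1]. intros; eapply Mono; eauto. intros j; apply Hj.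
    destruct (Hj Fin.F1) as [c2 H2].
    exists (Rmax c1 c2). intros j. apply (Fin.caseS' j (fun j => P j (Rmax c1 c2))).
    + eapply Mono; [apply Rmax_r|auto].
    + intros j0. eapply Mono; [apply Rmax_l|auto].
Qed.

Lemma ev_max (P Q : nat -> Prop) : (exists N, forall k, (N <= k)%nat -> P k) -> (exists N, forall k, (N <= k)%nat -> Q k) ->
  exists N, forall k, (N <= k)%nat -> P k /\ Q k.
Proof. intros [N1 H1] [N2 H2]. exists (max N1 N2). intros; split; [apply H1|apply H2]; lia. Qed.

Section GoodVec.
Context {H : CHilbertSpace}.
Variable n : nat.
Variable T : Fin.t n -> H -> H.
Variable C : R.
Variable lam : Fin.t n -> complex.
Variable x : nat -> H.
Hypothesis C0p : 0 <= C.
Hypothesis TL : forall j, linear_op (T j).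
Hypothesis TB : forall j v, hnorm (T j v) <= C * hnorm v.
Hypothesis LB : forall j, Cmod (lam j) <= C.
Hypothesis Ox : orthonormal x.
Hypothesis Xd : forall j eps, eps > 0 -> exists N, forall k, (N <= k)%nat -> Cmod (Csub (hinner (T j (x k)) (x k)) (lam j)) < eps.

Lemma good_k (z : nat -> H) len th : th > 0 -> exists k,
  (forall i, (i < len)%nat -> Cmod (hinner (x k) (z i)) < th /\
     forall j, Cmod (hinner (T j (x k)) (z i)) < th /\ Cmod (hinner (T j (z i)) (x k)) < th) /\
  (forall j, Cmod (Csub (hinner (T j (x k)) (x k)) (lam j)) < th).
Proof.
  intros Th.
  assert (A : exists N, forall k, (N <= k)%nat -> forall i, (i < len)%nat -> Cmod (hinner (x k) (z i)) < th /\
     forall j, Cmod (hinner (T j (x k)) (z i)) < th /\ Cmod (hinner (T j (z i)) (x k)) < th).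
  { destruct (ev_fin_mono len (fun i N => forall k, (N <= k)%nat -> Cmod (hinner (x k) (z i)) < th /\
     forall j, Cmod (hinner (T j (x k)) (z i)) < th /\ Cmod (hinner (T j (z i)) (x k)) < th)) as [N HN].
    { intros i N N' HN' R k Hk. apply R. lia. }
    { intros i _. apply ev_max.
      - apply (func_null (fun v => hinner v (z i)) (hnorm (z i))); auto.
        + split; intros; [apply hinner_add_l | apply hinner_scal_l].
        + intros v. rewrite Rmult_comm. apply cauchy_schwarz.
      - apply fin_ev. intros j. apply ev_max.
        + apply (func_null (fun v => hinner (T j v) (z i)) (C * hnorm (z i))); auto.
          * destruct (TL j) as [La Ls]. split; intros; [rewrite La; apply hinner_add_l | rewrite Ls; apply hinner_scal_l].
          * intros v. eapply Rle_trans. apply cauchy_schwarz. specialize (TB j v).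
            pose proof (hnorm_pos (z i)). nra.
        + destruct (func_null (fun v => hinner v (T j (z i))) (hnorm (T j (z i))) x) with (eps := th) as [N HN]; auto.
          * split; intros; [apply hinner_add_l | apply hinner_scal_l].
          * intros v. rewrite Rmult_comm. apply cauchy_schwarz.
          * exists N. intros k Hk. rewrite hinner_conj, Cmod_conj. apply HN; auto. }
    exists N. intros k Hk i Hi. apply HN; auto. }
  destruct A as [N1 HN1].
  destruct (fin_ev n (fun j k => Cmod (Csub (hinner (T j (x k)) (x k)) (lam j)) < th)) as [N2 HN2].
  { intros j. apply Xd; auto. }
  exists (max N1 N2). split. apply HN1; lia. apply HN2; lia.
Qed.

Lemma good_vec (z : nat -> H) len eta : forth z len -> eta > 0 -> exists w,
  hinner w w = C1 /\ (forall i, (i < len)%nat -> hinner w (z i) = C0) /\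
  forall j, Cmod (Csub (hinner (T j w) w) (lam j)) <= eta /\
    forall i, (i < len)%nat -> Cmod (hinner (T j w) (z i)) <= eta /\ Cmod (hinner (T j (z i)) w) <= eta.
Proof.
  intros Oz Eta.
  set (L := INR len + 1).
  assert (L1 : 1 <= L) by (unfold L; pose proof (pos_INR len); lra).
  assert (Pos : 0 < (4 * C + 2) * L * (eta + 1)) by (apply Rmult_lt_0_compat; [apply Rmult_lt_0_compat|]; lra).
  set (th := eta / ((4 * C + 2) * L * (eta + 1))).
  assert (Th : th > 0) by (unfold th; apply Rdiv_lt_0_compat; lra).
  assert (ThL : L * th <= 1 / 2).
  { unfold th. apply (Rmult_le_reg_r ((4 * C + 2) * (eta + 1))). apply Rmult_lt_0_compat; lra.
    replace (L * (eta / ((4 * C + 2) * L * (eta + 1))) * ((4 * C + 2) * (eta + 1))) with eta by (field; repeat split; lra). nra. }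
  assert (ThE : th + 4 * C * L * th <= eta).
  { unfold th. replace (eta / ((4 * C + 2) * L * (eta + 1)) + 4 * C * L * (eta / ((4 * C + 2) * L * (eta + 1))))
      with (eta * ((1 + 4 * C * L) / ((4 * C + 2) * L * (eta + 1)))) by (field; repeat split; lra).
    apply Rle_trans with (eta * 1); [|lra]. apply Rmult_le_compat_l. lra.
    apply (Rmult_le_reg_r ((4 * C + 2) * L * (eta + 1))). lra.
    replace ((1 + 4 * C * L) / ((4 * C + 2) * L * (eta + 1)) * ((4 * C + 2) * L * (eta + 1))) with (1 + 4 * C * L) by (field; repeat split; lra).
    assert (0 <= C * L * eta) by (apply Rmult_le_pos; [apply Rmult_le_pos|]; lra).
    assert (0 <= L * eta) by (apply Rmult_le_pos; lra).
    replace ((4 * C + 2) * L * (eta + 1) * 1) with (4 * (C * L * eta) + 4 * C * L + 2 * (L * eta) + 2 * L) by ring.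
    lra. }
  destruct (good_k z len th Th) as [k [Gz Gd]].
  set (xk := x k) in *.
  set (p := proj z len xk). set (r := hsub xk p).
  assert (Nx : Re (hinner xk xk) = 1). { unfold xk. rewrite Ox, Nat.eqb_refl. auto. }
  assert (Np : Re (hinner p p) <= L * th * (L * th)).
  { unfold p, proj. rewrite lincomb_orth_nsq by auto.
    apply Rle_trans with (Rsum (fun _ => th * th) len).
    - apply Rsum_le. intros i Hi. destruct (Gz i Hi) as [G1 _]. pose proof (Cmod_ge_0 (hinner xk (z i))). nra.
    - rewrite Rsum_const. unfold L. pose proof (pos_INR len). nra. }
  set (np := hnorm p). set (nr := hnorm r).
  assert (NPb : np <= L * th) by (apply hnorm_le_sq; auto; nra).
  assert (NP0 : 0 <= np) by apply hnorm_pos.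
  assert (Pyth : np * np + nr * nr = 1).
  { unfold np, nr. rewrite !hnorm_sq. rewrite <- Nx. unfold r, p. rewrite (proj_nsq z len xk Oz). auto. }
  assert (NR0 : 0 <= nr) by apply hnorm_pos.
  assert (NRp : 0 < nr) by nra.
  assert (NR1 : nr <= 1) by nra.
  assert (NRg : 1 - nr <= np) by nra.
  set (w := hscal (RtoC (/ nr)) r).
  assert (Ww : hinner w w = C1).
  { unfold w. rewrite hinner_scal_l, hinner_scal_r, inner_self_eq. rewrite <- hnorm_sq. fold nr.
    apply Ceq; simpl; field; lra. }
  assert (Wz : forall i, (i < len)%nat -> hinner w (z i) = C0).
  { intros i Hi. unfold w. rewrite hinner_scal_l. unfold r, p. rewrite proj_orth by auto. apply Cmul_0_r. }
  set (D := hsub w xk).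
  assert (DE : D = hsub (hscal (RtoC (/ nr - 1)) r) p).
  { unfold D. replace xk with (hadd p r) at 1 by (unfold r; apply hadd_sub_cancel).
    unfold w. apply hext. intros v. rewrite !hinner_sub_l, !hinner_scal_l, hinner_add_l. cring. }
  assert (ND : hnorm D <= 2 * L * th).
  { rewrite DE. eapply Rle_trans. apply hnorm_add. rewrite hnorm_opp, hnorm_scal, Cmod_RtoC. fold np nr.
    rewrite Rabs_right. replace ((/ nr - 1) * nr) with (1 - nr) by (field; lra). lra.
    apply Rle_ge. apply (Rmult_le_reg_r nr); auto. field_simplify; lra. }
  assert (WE : w = hadd xk D). { unfold D. rewrite hadd_comm. symmetry. apply hsub_add_r. }
  exists w. split; auto. split; auto. intros j. destruct (TL j) as [La Ls].
  assert (TD : hnorm (T j D) <= C * (2 * L * th)) by (eapply Rle_trans; [apply TB|]; apply Rmult_le_compat_l; auto).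
  assert (Nw : hnorm w = 1). { unfold hnorm. rewrite Ww. simpl. apply sqrt_1. }
  assert (Nxk : hnorm xk = 1). { unfold hnorm. rewrite Nx. apply sqrt_1. }
  split.
  - assert (E : Csub (hinner (T j w) w) (lam j) =
                Cadd (Csub (hinner (T j xk) xk) (lam j)) (Cadd (hinner (T j D) w) (hinner (T j xk) D))).
    { assert (E1 : hinner (T j w) w = Cadd (hinner (T j xk) w) (hinner (T j D) w)).
      { rewrite WE at 1. rewrite La, hinner_add_l. auto. }
      assert (E2 : hinner (T j xk) w = Cadd (hinner (T j xk) xk) (hinner (T j xk) D)).
      { rewrite WE. apply hinner_add_r. }
      rewrite E1, E2. cring. }
    rewrite E. eapply Rle_trans. apply Cmod_add. eapply Rle_trans. apply Rplus_le_compat_l. apply Cmod_add.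
    pose proof (Gd j). pose proof (cauchy_schwarz (T j D) w). pose proof (cauchy_schwarz (T j xk) D).
    pose proof (TB j xk). rewrite Nw in *. rewrite Nxk in *. pose proof (hnorm_pos D).
    fold xk in H0.
    assert (hnorm (T j xk) * hnorm D <= C * (2 * L * th)) by nra.
    lra.
  - intros i Hi. destruct (Gz i Hi) as [_ Gj]. destruct (Gj j) as [G1 G2]. fold xk in G1, G2.
    assert (Nz : hnorm (z i) = 1). { unfold hnorm. rewrite Oz, Nat.eqb_refl by auto. simpl. apply sqrt_1. }
    assert (CLt : 0 <= C * L * th) by (apply Rmult_le_pos; [apply Rmult_le_pos|]; lra).
    split.
    + rewrite WE, La, hinner_add_l. eapply Rle_trans. apply Cmod_add.
      pose proof (cauchy_schwarz (T j D) (z i)). rewrite Nz in H0. lra.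
    + rewrite WE, hinner_add_r. eapply Rle_trans. apply Cmod_add.
      pose proof (cauchy_schwarz (T j (z i)) D). pose proof (TB j (z i)). rewrite Nz in H1.
      pose proof (hnorm_pos D). pose proof (hnorm_pos (T j (z i))).
      assert (hnorm (T j (z i)) * hnorm D <= C * (2 * L * th)) by nra. lra.
Qed.

End GoodVec.


Definition ext {H : CHilbertSpace} (z : nat -> H) len (w : H) : nat -> H :=
  fun i => if Nat.eqb i len then w else z i.

Lemma forth_ext {H : CHilbertSpace} (z : nat -> H) len w : forth z len -> hinner w w = C1 ->
  (forall i, (i < len)%nat -> hinner w (z i) = C0) -> forth (ext z len w) (S len).
Proof.
  intros O Ww Wz i j Hi Hj. unfold ext.
  destruct (Nat.eqb_spec i len), (Nat.eqb_spec j len); subst.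
  - rewrite Nat.eqb_refl. auto.
  - replace (Nat.eqb len j) with false by (symmetry; apply Nat.eqb_neq; auto). apply Wz. lia.
  - replace (Nat.eqb i len) with false by (symmetry; apply Nat.eqb_neq; auto).
    rewrite hinner_conj, Wz by lia. apply Cconj_0.
  - apply O; lia.
Qed.

Lemma Rsum_delta0 c n : (0 < n)%nat -> Rsum (fun b => if Nat.eqb b 0 then c else 0) n = c.
Proof.
  induction n; intros Hn; [lia|]. simpl. destruct n.
  - simpl. ring.
  - rewrite IHn by lia. simpl. ring.
Qed.

Section Block.
Context {H : CHilbertSpace}.
Variable n : nat.
Variable T : Fin.t n -> H -> H.
Variable C : R.
Variable lam : Fin.t n -> complex.
Variable x : nat -> H.
Hypothesis C0p : 0 <= C.
Hypothesis TL : forall j, linear_op (T j).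
Hypothesis TB : forall j v, hnorm (T j v) <= C * hnorm v.
Hypothesis LB : forall j, Cmod (lam j) <= C.
Hypothesis Ox : orthonormal x.
Hypothesis Xd : forall j eps, eps > 0 -> exists N, forall k, (N <= k)%nat -> Cmod (Csub (hinner (T j (x k)) (x k)) (lam j)) < eps.

Lemma add_goods (z : nat -> H) len eta cnt : forth z len -> eta > 0 -> exists z',
  (forall i, (i < len)%nat -> z' i = z i) /\ forth z' (len + cnt) /\
  forall i, (len <= i < len + cnt)%nat -> forall j,
    Cmod (Csub (hinner (T j (z' i)) (z' i)) (lam j)) <= eta /\
    forall i', (i' < i)%nat -> Cmod (hinner (T j (z' i)) (z' i')) <= eta /\ Cmod (hinner (T j (z' i')) (z' i)) <= eta.
Proof.
  intros Oz Eta. induction cnt.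
  - exists z. rewrite Nat.add_0_r. split; auto. split; auto. intros; lia.
  - destruct IHcnt as [z' [P1 [P2 P3]]].
    destruct (good_vec n T C lam x C0p TL TB Ox Xd z' (len + cnt) eta P2 Eta) as [w [Ww [Wz Wd]]].
    exists (ext z' (len + cnt) w). split; [|split].
    + intros i Hi. unfold ext. replace (Nat.eqb i (len + cnt)) with false by (symmetry; apply Nat.eqb_neq; lia). auto.
    + rewrite Nat.add_succ_r. apply forth_ext; auto.
    + intros i Hi j. unfold ext. destruct (Nat.eqb_spec i (len + cnt)).
      * subst. destruct (Wd j) as [D1 D2]. split; auto. intros i' Hi'.
        replace (Nat.eqb i' (len + cnt)) with false by (symmetry; apply Nat.eqb_neq; lia). apply D2; auto.
      * destruct (P3 i ltac:(lia) j) as [D1 D2]. split; auto. intros i' Hi'.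
        replace (Nat.eqb i' (len + cnt)) with false by (symmetry; apply Nat.eqb_neq; lia). apply D2; auto.
Qed.

Lemma first_vec (z : nat -> H) len (dm : H) : forth z len -> exists w,
  hinner w w = C1 /\ (forall i, (i < len)%nat -> hinner w (z i) = C0) /\
  forall y, (forall i, (i < len)%nat -> hinner y (z i) = C0) -> hinner y w = C0 -> hinner y dm = C0.
Proof.
  intros Oz. set (r := hsub dm (proj z len dm)).
  assert (Py : forall y, (forall i, (i < len)%nat -> hinner y (z i) = C0) -> hinner y (proj z len dm) = C0).
  { intros y Hy. unfold proj. apply orth_lincomb_r. auto. }
  destruct (Req_dec (hnorm r) 0) as [R0|R0].
  - destruct (good_vec n T C lam x C0p TL TB Ox Xd z len 1 Oz ltac:(lra)) as [w [Ww [Wz _]]].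
    exists w. split; auto. split; auto. intros y Hy _.
    apply hnorm_zero, hsub_eq0 in R0. rewrite R0. auto.
  - assert (NR : 0 < hnorm r) by (pose proof (hnorm_pos r); lra).
    exists (hscal (RtoC (/ hnorm r)) r). split; [|split].
    + rewrite hinner_scal_l, hinner_scal_r, inner_self_eq, <- hnorm_sq. apply Ceq; simpl; field; lra.
    + intros i Hi. rewrite hinner_scal_l. unfold r. rewrite proj_orth by auto. apply Cmul_0_r.
    + intros y Hy Hw. rewrite hinner_scal_r in Hw.
      assert (hinner y r = C0).
      { destruct (hinner y r) as [a b] eqn:E. unfold Cmul, Cconj, RtoC in Hw. simpl in Hw. injection Hw. intros.
        apply Ceq; simpl.
        - apply (Rmult_eq_reg_l (/ hnorm r)). lra. apply Rinv_neq_0_compat. lra.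
        - apply (Rmult_eq_reg_l (/ hnorm r)). lra. apply Rinv_neq_0_compat. lra. }
      replace dm with (hadd (proj z len dm) r) by (unfold r; apply hadd_sub_cancel).
      rewrite hinner_add_r, Py, H0 by auto. cring.
Qed.

End Block.

Section Block2.
Context {H : CHilbertSpace}.
Variable n : nat.
Variable T : Fin.t n -> H -> H.
Variable C : R.
Variable lam : Fin.t n -> complex.
Variable x : nat -> H.
Hypothesis C0p : 0 <= C.
Hypothesis TL : forall j, linear_op (T j).
Hypothesis TB : forall j v, hnorm (T j v) <= C * hnorm v.
Hypothesis LB : forall j, Cmod (lam j) <= C.
Hypothesis Ox : orthonormal x.
Hypothesis Xd : forall j eps, eps > 0 -> exists N, forall k, (N <= k)%nat -> Cmod (Csub (hinner (T j (x k)) (x k)) (lam j)) < eps.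

Lemma exists_pow2 X : exists p, X <= INR (2 ^ p).
Proof.
  destruct (exists_nat_gt X) as [p Hp]. exists p. rewrite pow_INR. simpl INR at 1.
  replace (1 + 1) with 2 by ring. pose proof (pow2_ge_INR p). lra.
Qed.

Lemma Rsum_zero k : Rsum (fun _ => 0) k = 0.
Proof. rewrite Rsum_const. ring. Qed.

Lemma block (z : nat -> H) len (dm : H) (m : nat) : forth z len -> exists z' len',
  (len < len')%nat /\ (forall i, (i < len)%nat -> z' i = z i) /\ forth z' len' /\
  (forall y, (forall i, (i < len')%nat -> hinner y (z' i) = C0) -> hinner y dm = C0) /\
  forall i, (len <= i < len')%nat -> forall j, Cmod (Csub (hinner (T j (z' i)) (z' i)) (lam j)) <= / INR (S m).
Proof.
  intros Oz.
  destruct (first_vec n T C lam x C0p TL TB Ox Xd z len dm Oz) as [w0 [Ww [Wz Wspan]]].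
  set (z1 := ext z len w0).
  assert (O1 : forth z1 (S len)) by (apply forth_ext; auto).
  destruct (exists_pow2 (INR (S m) * (2 * C + 1))) as [p Hp].
  set (nn := (2 ^ p)%nat) in *.
  assert (nn1 : (1 <= nn)%nat) by apply pow2_pos.
  set (N := INR nn) in *.
  assert (N1 : 1 <= N) by (unfold N; apply (le_INR 1); auto).
  set (eta := / (N * N)).
  assert (Eta : eta > 0) by (unfold eta; apply Rinv_0_lt_compat; nra).
  destruct (add_goods n T C lam x C0p TL TB Ox Xd z1 (S len) eta (nn - 1) O1 Eta) as [z2 [P1 [O2 P3]]].
  replace (S len + (nn - 1))%nat with (len + nn)%nat in O2, P3 by lia.
  set (Zb := fun a => z2 (len + a)%nat).
  assert (OZ : forth Zb nn) by (intros a b Ha Hb; unfold Zb; rewrite O2 by lia;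
     destruct (Nat.eqb_spec a b), (Nat.eqb_spec (len + a) (len + b)); auto; lia).
  assert (Z2z : forall i, (i < len)%nat -> z2 i = z i).
  { intros i Hi. rewrite P1 by lia. unfold z1, ext. replace (Nat.eqb i len) with false by (symmetry; apply Nat.eqb_neq; lia). auto. }
  assert (Zb0 : Zb 0%nat = w0).
  { unfold Zb. rewrite Nat.add_0_r, P1 by lia. unfold z1, ext. rewrite Nat.eqb_refl. auto. }
  set (z3 := fun i => if Nat.ltb i len then z i else mixv p Zb (i - len)).
  assert (Zold : forall i a, (i < len)%nat -> (a < nn)%nat -> hinner (Zb a) (z i) = C0).
  { intros i a Hi Ha. unfold Zb. rewrite <- Z2z by auto. rewrite O2 by lia.
    replace (Nat.eqb (len + a) i) with false by (symmetry; apply Nat.eqb_neq; lia). auto. }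
  exists z3, (len + nn)%nat. split; [lia|]. split; [|split; [|split]].
  - intros i Hi. unfold z3. replace (Nat.ltb i len) with true by (symmetry; apply Nat.ltb_lt; auto). auto.
  - intros i j Hi Hj. unfold z3.
    destruct (Nat.ltb_spec i len), (Nat.ltb_spec j len).
    + apply Oz; auto.
    + rewrite hinner_conj, mix_orth_old. replace (Nat.eqb i j) with false by (symmetry; apply Nat.eqb_neq; lia). apply Cconj_0.
      intros a Ha. apply Zold; auto.
    + rewrite mix_orth_old. replace (Nat.eqb i j) with false by (symmetry; apply Nat.eqb_neq; lia). auto.
      intros a Ha. apply Zold; auto.
    + rewrite (mix_forth p Zb OZ) by lia.
      destruct (Nat.eqb_spec (i - len) (j - len)), (Nat.eqb_spec i j); auto; lia.
  - intros y Hy. apply Wspan.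
    + intros i Hi. specialize (Hy i ltac:(lia)). unfold z3 in Hy. replace (Nat.ltb i len) with true in Hy by (symmetry; apply Nat.ltb_lt; auto). auto.
    + rewrite <- Zb0. apply (mix_span p Zb y); [|apply pow2_pos].
      intros q Hq. specialize (Hy (len + q)%nat ltac:(fold nn in Hq; lia)). unfold z3 in Hy.
      replace (Nat.ltb (len + q) len) with false in Hy by (symmetry; apply Nat.ltb_ge; lia).
      replace (len + q - len)%nat with q in Hy by lia. auto.
  - intros i Hi j. unfold z3. replace (Nat.ltb i len) with false by (symmetry; apply Nat.ltb_ge; lia).
    eapply Rle_trans. apply (mix_diag p Zb (T j) (lam j) (i - len) OZ (TL j)). fold nn. lia.
    fold nn. fold N.
    assert (TBd : forall a b, (a < nn)%nat -> (b < nn)%nat ->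
      Cmod (Csub (hinner (T j (Zb a)) (Zb b)) (if Nat.eqb a b then lam j else C0)) <=
      (if Nat.eqb a 0 then (if Nat.eqb b 0 then 2 * C else 0) else 0) + eta).
    { intros a b Ha Hb. destruct (Nat.eqb_spec a 0), (Nat.eqb_spec b 0); try subst a; try subst b.
      - rewrite Nat.eqb_refl, Zb0. eapply Rle_trans. apply Cmod_sub_tri with (b := C0).
        replace (Csub (hinner (T j w0) w0) C0) with (hinner (T j w0) w0) by cring.
        replace (Csub C0 (lam j)) with (Copp (lam j)) by cring. rewrite Cmod_opp.
        pose proof (cauchy_schwarz (T j w0) w0). pose proof (TB j w0).
        assert (Nw : hnorm w0 = 1) by (unfold hnorm; rewrite Ww; simpl; apply sqrt_1).
        rewrite Nw in *. pose proof (LB j). lra.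
      - replace (Nat.eqb 0 b) with false by (symmetry; apply Nat.eqb_neq; lia).
        replace (Csub (hinner (T j (Zb 0%nat)) (Zb b)) C0) with (hinner (T j (Zb 0%nat)) (Zb b)) by cring.
        destruct (P3 (len + b)%nat ltac:(lia) j) as [_ D2]. destruct (D2 (len + 0)%nat ltac:(lia)) as [_ D].
        unfold Zb. lra.
      - replace (Nat.eqb a 0) with false by (symmetry; apply Nat.eqb_neq; lia).
        replace (Csub (hinner (T j (Zb a)) (Zb 0%nat)) C0) with (hinner (T j (Zb a)) (Zb 0%nat)) by cring.
        destruct (P3 (len + a)%nat ltac:(lia) j) as [_ D2]. destruct (D2 (len + 0)%nat ltac:(lia)) as [D _].
        unfold Zb. lra.
      - destruct (Nat.eqb_spec a b).
        + subst. destruct (P3 (len + b)%nat ltac:(lia) j) as [D _]. unfold Zb. lra.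
        + replace (Csub (hinner (T j (Zb a)) (Zb b)) C0) with (hinner (T j (Zb a)) (Zb b)) by cring.
          destruct (Nat.lt_total a b) as [ab|[ab|ab]]; [|lia|].
          * destruct (P3 (len + b)%nat ltac:(lia) j) as [_ D2]. destruct (D2 (len + a)%nat ltac:(lia)) as [_ D].
            unfold Zb. lra.
          * destruct (P3 (len + a)%nat ltac:(lia) j) as [_ D2]. destruct (D2 (len + b)%nat ltac:(lia)) as [D _].
            unfold Zb. lra. }
    apply Rle_trans with (Rsum (fun a => Rsum (fun b => / N * ((if Nat.eqb a 0 then (if Nat.eqb b 0 then 2 * C else 0) else 0) + eta)) nn) nn).
    { apply Rsum_le. intros a Ha. apply Rsum_le. intros b Hb. apply Rmult_le_compat_l.
      apply Rlt_le, Rinv_0_lt_compat; lra. apply TBd; auto. }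
    rewrite (Rsum_ext _ (fun a => / N * ((if Nat.eqb a 0 then 2 * C else 0) + N * eta))).
    2: { intros a Ha. rewrite Rsum_scal, Rsum_add, Rsum_const. f_equal. f_equal.
         destruct (Nat.eqb a 0). apply Rsum_delta0; lia. apply Rsum_zero. }
    rewrite Rsum_scal, Rsum_add, Rsum_const, Rsum_delta0 by lia. fold N.
    unfold eta. replace (/ N * (2 * C + N * (N * / (N * N)))) with ((2 * C + 1) / N) by (field; lra).
    assert (SM : 0 < INR (S m)) by (apply lt_0_INR; lia).
    apply (Rmult_le_reg_r (N * INR (S m))). nra.
    replace ((2 * C + 1) / N * (N * INR (S m))) with (INR (S m) * (2 * C + 1)) by (field; lra).
    replace (/ INR (S m) * (N * INR (S m))) with N by (field; lra). lra.
Qed.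

End Block2.


Section Constr.
Context {H : CHilbertSpace}.
Variable n : nat.
Variable T : Fin.t n -> H -> H.
Variable C : R.
Variable lam : Fin.t n -> complex.
Variable x : nat -> H.
Variable d : nat -> H.
Hypothesis C0p : 0 <= C.
Hypothesis TL : forall j, linear_op (T j).
Hypothesis TB : forall j v, hnorm (T j v) <= C * hnorm v.
Hypothesis LB : forall j, Cmod (lam j) <= C.
Hypothesis Ox : orthonormal x.
Hypothesis Xd : forall j eps, eps > 0 -> exists N, forall k, (N <= k)%nat -> Cmod (Csub (hinner (T j (x k)) (x k)) (lam j)) < eps.
Hypothesis Dd : forall v eps, eps > 0 -> exists k, hnorm (hsub v (d k)) < eps.

Definition Qrel (s : (nat -> H) * nat) (m : nat) (s' : (nat -> H) * nat) : Prop :=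
  (snd s < snd s')%nat /\ (forall i, (i < snd s)%nat -> fst s' i = fst s i) /\ forth (fst s') (snd s') /\
  (forall y, (forall i, (i < snd s')%nat -> hinner y (fst s' i) = C0) -> hinner y (d m) = C0) /\
  forall i, (snd s <= i < snd s')%nat -> forall j,
    Cmod (Csub (hinner (T j (fst s' i)) (fst s' i)) (lam j)) <= / INR (S m).

Definition stepf (s : (nat -> H) * nat) (m : nat) : (nat -> H) * nat :=
  match excluded_middle_informative (exists s', Qrel s m s') with
  | left h => proj1_sig (constructive_indefinite_description _ h)
  | right _ => s
  end.

Fixpoint stage (m : nat) : (nat -> H) * nat :=
  match m with O => (fun _ => hzero, 0%nat) | S m' => stepf (stage m') m' end.

Lemma stage_Q m : forth (fst (stage m)) (snd (stage m)) /\ Qrel (stage m) m (stage (S m)).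
Proof.
  induction m.
  - assert (F0 : forth (fst (stage 0)) (snd (stage 0))) by (intros i j Hi; simpl in Hi; lia).
    split; auto. simpl stage at 2. unfold stepf.
    destruct excluded_middle_informative as [h|h].
    + destruct constructive_indefinite_description; auto.
    + exfalso. apply h. destruct (block n T C lam x C0p TL TB LB Ox Xd (fst (stage 0)) (snd (stage 0)) (d 0%nat) 0%nat F0)
        as [z' [len' P]]. exists (z', len'). exact P.
  - destruct IHm as [_ [_ [_ [F _]]]]. split; auto.
    simpl stage at 2. unfold stepf.
    destruct excluded_middle_informative as [h|h].
    + destruct constructive_indefinite_description; auto.
    + exfalso. apply h. destruct (block n T C lam x C0p TL TB LB Ox Xd (fst (stage (S m))) (snd (stage (S m))) (d (S m)) (S m) F)
        as [z' [len' P]]. exists (z', len'). exact P.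
Qed.

Definition Z m := fst (stage m).
Definition len m := snd (stage m).

Lemma len_ge m : (m <= len m)%nat.
Proof. induction m. unfold len; simpl; lia. destruct (stage_Q m) as [_ [Q _]]. unfold len in *. lia. Qed.

Lemma len_mono s s' : (s <= s')%nat -> (len s <= len s')%nat.
Proof. induction 1; auto. destruct (stage_Q m) as [_ [Q _]]. unfold len in *. lia. Qed.

Lemma prefix s s' i : (s <= s')%nat -> (i < len s)%nat -> Z s' i = Z s i.
Proof.
  induction 1; intros Hi; auto. destruct (stage_Q m) as [_ [_ [P _]]].
  unfold Z in *. rewrite P. apply IHle; auto. pose proof (len_mono s m H0). unfold len in *. lia.
Qed.

Definition ub (k : nat) : H := Z (S k) k.

Lemma ub_Z k s : (k < len s)%nat -> ub k = Z s k.
Proof.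
  intros Hk. unfold ub. destruct (Nat.le_gt_cases s (S k)).
  - apply prefix; auto.
  - symmetry. apply prefix. lia. pose proof (len_ge (S k)). lia.
Qed.

Lemma ub_orth : orthonormal ub.
Proof.
  intros a b. set (s := S (max a b)).
  pose proof (len_ge s). assert (a < s)%nat by (unfold s; lia). assert (b < s)%nat by (unfold s; lia).
  rewrite (ub_Z a s), (ub_Z b s) by lia.
  destruct (stage_Q s) as [F _]. unfold len in *. apply F; lia.
Qed.

Lemma ub_span y : (forall k, hinner y (ub k) = C0) -> y = hzero.
Proof.
  intros Hy.
  assert (Yd : forall m, hinner y (d m) = C0).
  { intros m. destruct (stage_Q m) as [_ [_ [_ [_ [S _]]]]]. apply S.
    intros i Hi. rewrite <- (Hy i). f_equal. symmetry. apply ub_Z. auto. }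
  apply hnorm_zero. apply Rle_antisym; [|apply hnorm_pos].
  apply le_eps_le. intros e He.
  destruct (Dd y (e / 2)) as [m Hm]. lra.
  assert (E : hinner y y = hinner y (hsub y (d m))) by (rewrite hinner_sub_r, Yd; cring).
  pose proof (hnorm_sq y). rewrite E in H0.
  pose proof (cauchy_schwarz y (hsub y (d m))). pose proof (Re_le_Cmod (hinner y (hsub y (d m)))).
  pose proof (Rle_abs (Re (hinner y (hsub y (d m))))). pose proof (hnorm_pos y).
  pose proof (hnorm_pos (hsub y (d m))).
  destruct (Rle_or_lt (hnorm y) (e / 2)). lra.
  assert (hnorm y * hnorm y <= hnorm y * (e / 2)) by nra.
  assert (hnorm y <= e / 2) by nra. lra.
Qed.

Lemma find_block s0 k : (len s0 <= k)%nat -> exists r, (s0 <= r)%nat /\ (len r <= k < len (S r))%nat.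
Proof.
  intros Hk. assert (Gen : forall t, (k < len (s0 + t))%nat -> exists r, (s0 <= r)%nat /\ (len r <= k < len (S r))%nat).
  { induction t; intros Ht. rewrite Nat.add_0_r in Ht. lia.
    destruct (Nat.lt_ge_cases k (len (s0 + t))). apply IHt; auto.
    exists (s0 + t)%nat. split. lia. split; auto. rewrite <- Nat.add_succ_r. auto. }
  apply (Gen (S k)). pose proof (len_ge (s0 + S k)). lia.
Qed.

Lemma ub_diag j eps : eps > 0 -> exists N, forall k, (N <= k)%nat ->
  Cmod (Csub (hinner (T j (ub k)) (ub k)) (lam j)) <= eps.
Proof.
  intros He. destruct (exists_nat_gt (/ eps)) as [m0 Hm0].
  exists (len m0). intros k Hk. destruct (find_block m0 k Hk) as [r [Hr [K1 K2]]].
  destruct (stage_Q r) as [_ [_ [_ [_ [_ E]]]]].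
  rewrite (ub_Z k (S r)) by auto. unfold Z. eapply Rle_trans. apply E. split; auto.
  pose proof (le_INR m0 (S r) ltac:(lia)).
  assert (0 < INR (S r)) by (apply lt_0_INR; lia).
  apply (Rmult_le_reg_r (INR (S r) * / eps)). apply Rmult_lt_0_compat; auto. apply Rinv_0_lt_compat; auto.
  replace (/ INR (S r) * (INR (S r) * / eps)) with (/ eps) by (field; lra).
  replace (eps * (INR (S r) * / eps)) with (INR (S r)) by (field; lra). lra.
Qed.

End Constr.

Lemma onb_exists {H : CHilbertSpace} (n : nat) (T : Fin.t n -> H -> H) C lam (x : nat -> H) (d : nat -> H) :
  0 <= C -> (forall j, linear_op (T j)) -> (forall j v, hnorm (T j v) <= C * hnorm v) ->
  (forall j, Cmod (lam j) <= C) -> orthonormal x ->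
  (forall j eps, eps > 0 -> exists N, forall k, (N <= k)%nat -> Cmod (Csub (hinner (T j (x k)) (x k)) (lam j)) < eps) ->
  (forall v eps, eps > 0 -> exists k, hnorm (hsub v (d k)) < eps) ->
  exists u : nat -> H, orthonormal_basis u /\ forall j eps, eps > 0 -> exists N, forall k, (N <= k)%nat ->
    Cmod (Csub (hinner (T j (u k)) (u k)) (lam j)) <= eps.
Proof.
  intros C0p TL TB LB Ox Xd Dd.
  exists (ub n T lam d). split. split.
  - apply (ub_orth n T C lam x d C0p TL TB LB Ox Xd).
  - apply (ub_span n T C lam x d C0p TL TB LB Ox Xd Dd).
  - intros j eps He. apply (ub_diag n T C lam x d C0p TL TB LB Ox Xd); auto.
Qed.


Theorem proposition5p3 (H : CHilbertSpace)
  (Hsep : separable H) (Hinf : infinite_dimensional H)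
  (n : nat) (T : Fin.t n -> H -> H) (HT : forall j, bounded_op (T j)) :
  forall lam : Fin.t n -> complex,
    (exists K : Fin.t n -> H -> H,
        (forall j, compact_op (K j)) /\ D_const (tuple_add T K) lam)
    <-> ess_num_range T lam.
Proof.
  intros lam. split.
  - intros [K [Kc D]]. apply (forward_dir H n T K lam Kc D).
  - intros [x [Ox Xc]].
    destruct (fin_bound n (fun j c => 0 <= c /\ (forall v, hnorm (T j v) <= c * hnorm v) /\ Cmod (lam j) <= c)) as [C HC].
    { intros j c c' Hc [P1 [P2 P3]]. split; [lra|]. split; [|lra].
      intros v. specialize (P2 v). pose proof (hnorm_pos v). nra. }
    { intros j. destruct (HT j) as [_ [M HM]]. exists (Rmax 0 (Rmax M (Cmod (lam j)))).
      pose proof (Rmax_l 0 (Rmax M (Cmod (lam j)))). pose proof (Rmax_r 0 (Rmax M (Cmod (lam j)))).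
      pose proof (Rmax_l M (Cmod (lam j))). pose proof (Rmax_r M (Cmod (lam j))).
      split; [lra|]. split; [|lra]. intros v. specialize (HM v). pose proof (hnorm_pos v). nra. }
    set (C' := Rmax 0 C).
    assert (C0p : 0 <= C') by apply Rmax_l.
    assert (TL : forall j, linear_op (T j)) by (intros j; apply (HT j)).
    assert (TB : forall j v, hnorm (T j v) <= C' * hnorm v).
    { intros j v. destruct (HC j) as [_ [h _]]. specialize (h v). pose proof (Rmax_r 0 C) as R1. pose proof (hnorm_pos v) as R2.
      fold C' in R1. apply Rle_trans with (C * hnorm v); auto. apply Rmult_le_compat_r; auto. }
    assert (LB : forall j, Cmod (lam j) <= C').
    { intros j. destruct (HC j) as [_ [_ h]]. pose proof (Rmax_r 0 C) as R1. fold C' in R1. lra. }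
    assert (Xd : forall j eps, eps > 0 -> exists N, forall k, (N <= k)%nat -> Cmod (Csub (hinner (T j (x k)) (x k)) (lam j)) < eps).
    { intros j eps He. destruct (Xc j eps He) as [N HN]. exists N. intros k Hk. specialize (HN k Hk).
      unfold R_dist in HN. rewrite Rminus_0_r, Rabs_right in HN; auto. apply Rle_ge, Cmod_ge_0. }
    destruct Hsep as [d Dd].
    destruct (onb_exists n T C' lam x d C0p TL TB LB Ox Xd Dd) as [u [[Ou Mu] Ud]].
    set (ep := fun j k => Csub (lam j) (hinner (T j (u k)) (u k))).
    assert (Kex : forall j, exists K, compact_op K /\ forall k, K (u k) = hscal (ep j k) (u k)).
    { intros j. apply diag_op; auto. intros e He. destruct (Ud j e He) as [N HN]. exists N. intros k Hk.
      unfold ep. rewrite Cmod_sub_sym. apply HN; auto. }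
    set (Kf := fun j => proj1_sig (constructive_indefinite_description _ (Kex j))).
    assert (KP : forall j, compact_op (Kf j) /\ forall k, Kf j (u k) = hscal (ep j k) (u k)).
    { intros j. unfold Kf. destruct constructive_indefinite_description; auto. }
    exists Kf. split. intros j; apply KP.
    exists u. split. split; auto. intros k j. unfold tuple_add. rewrite hinner_add_l.
    destruct (KP j) as [_ Kb]. rewrite Kb, hinner_scal_l, Ou, Nat.eqb_refl. unfold ep. cring.
Qed.
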